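(* Let $f$ satisfy the standing assumptions (A) and let $a$ be defined as below. Assume there exists $\tilde\sigma>\sigma$ such that $a$ is nondecreasing on $[\sigma,\tilde\sigma]$. Then there exists a sequence $(f_n)_{n\in\mathbb{N}}$ of convex functions with $f_n(0)=0$ and $f_n(s)/s\to\infty$ as $s\to\infty$ such that: (i) $f_n\in C^1([0,+\infty))\cap C^3((0,+\infty))$; (ii) $f_n\to f$ uniformly on compact subsets of $[0,+\infty)$; (iii) $f_n'(0)=0$, $f_n'$ decreases in $n$ to $f'$ and $f_n'\to f'$ uniformly on compact subsets of $[0,+\infty)$; (iv) $f_n''>0$ on $(0,+\infty)$; (v) $\lim_{s\to0^+}\frac{sf_n''(s)-f_n'(s)}{s^3}=0$ and $\lim_{s\to0^+}\frac{f_n'(s)}{s}=0$ for each $n$; (vi) $\lim_{n\to\infty}\frac{sf_n''(s)-f_n'(s)}{s^3}=0$ and $\lim_{n\to\infty}\frac{f_n'(s)}{s}=0$ uniformly on compact subsets of $[0,\sigma)$; (vii) $a_n\to a$ uniformly on compact subsets of $(0,+\infty)$ and $b_n\to b$ uniformly on compact subsets of $(\sigma,+\infty)$; and (viii) if moreover $f\in C^2((0,+\infty))$, then $f_n''\to f''$ uniformly on compact subsets of $(0,+\infty)$.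
   Context: Standing assumptions (A) on $f:[0,+\infty)\to\mathbb{R}$: $f$ convex, nondecreasing, and there is $\sigma>0$ with $f\in C^1([0,+\infty))\cap C^3((\sigma,+\infty))$; $f(0)=0$ and $\lim_{s\to+\infty}f(s)/s=+\infty$; $f'(s)=0$ for $0\le s\le\sigma$; $f''(s)>0$ for $s>\sigma$. Define $a(s)=\frac{f'(s)}{sf''(s)}$ and $b(s)=\frac{s^2}{f''(s)}$ for $s>\sigma$, and $a(s)=b(s)=0$ for $0\le s\le\sigma$; and $a_n(s)=\frac{f_n'(s)}{sf_n''(s)}$, $b_n(s)=\frac{s^2}{f_n''(s)}$ for $s>0$. *)

(* Defs.v *)
From Stdlib Require Import Reals Rtopology.
Open Scope R_scope.

Definition cont_on (D : R -> Prop) (g : R -> R) : Prop :=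
  forall x, D x -> limit1_in g D (g x) x.

(* g' is the derivative of g at every point of D, relative to D
   (one-sided at a closed endpoint such as 0 for D = [0,+oo)). *)
Definition deriv_on (D : R -> Prop) (g g' : R -> R) : Prop :=
  forall x, D x ->
    limit1_in (fun y => (g y - g x) / (y - x)) (fun y => D y /\ y <> x) (g' x) x.

Definition convex_on (D : R -> Prop) (g : R -> R) : Prop :=
  forall x y t, D x -> D y -> 0 <= t <= 1 ->
    g (t * x + (1 - t) * y) <= t * g x + (1 - t) * g y.

Definition nondecr_on (D : R -> Prop) (g : R -> R) : Prop :=
  forall x y, D x -> D y -> x <= y -> g x <= g y.

Definition superlinear (g : R -> R) : Prop :=
  forall M, exists T, forall s, T < s -> M < g s / s.

Definition unif_cv_on (K : R -> Prop) (gn : nat -> R -> R) (g : R -> R) : Prop :=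
  forall eps, 0 < eps -> exists N : nat, forall n x, (N <= n)%nat -> K x ->
    Rabs (gn n x - g x) < eps.

Definition unif_cv_compacts (D : R -> Prop) (gn : nat -> R -> R) (g : R -> R) : Prop :=
  forall K, compact K -> (forall x, K x -> D x) -> unif_cv_on K gn g.

Definition Ici0 (x : R) : Prop := 0 <= x.
Definition Ioi (c x : R) : Prop := c < x.

(* a and b of the paper, for f' = f1, f'' = f2 (f2 only meaningful on (sigma,+oo)) *)
Definition a_fun (sigma : R) (f1 f2 : R -> R) (s : R) : R :=
  if Rlt_dec sigma s then f1 s / (s * f2 s) else 0.
Definition b_fun (sigma : R) (f2 : R -> R) (s : R) : R :=
  if Rlt_dec sigma s then s ^ 2 / f2 s else 0.

Definition an_fun (g1 g2 : R -> R) (s : R) : R := g1 s / (s * g2 s).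
Definition bn_fun (g2 : R -> R) (s : R) : R := s ^ 2 / g2 s.

(* Standing assumptions (A) on f, with f' = f1, f'' = f2, f''' = f3 on (sigma,+oo). *)
Definition assumptions_A (sigma : R) (f f1 f2 f3 : R -> R) : Prop :=
  0 < sigma /\
  convex_on Ici0 f /\ nondecr_on Ici0 f /\
  deriv_on Ici0 f f1 /\ cont_on Ici0 f1 /\
  deriv_on (Ioi sigma) f1 f2 /\ deriv_on (Ioi sigma) f2 f3 /\ cont_on (Ioi sigma) f3 /\
  f 0 = 0 /\ superlinear f /\
  (forall s, 0 <= s <= sigma -> f1 s = 0) /\
  (forall s, sigma < s -> 0 < f2 s).

(* Main.v *)
Require Import Defs.
From Stdlib Require Import Reals Rtopology Lra Lia Classical.
From Coquelicot Require Import Coquelicot.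
Open Scope R_scope.


Lemma deq (f : R -> R) (x a b : R) : is_derive f x a -> a = b -> is_derive f x b.
Proof. intros H ->; exact H. Qed.
Lemma dplus (f g : R -> R) x a b : is_derive f x a -> is_derive g x b ->
  is_derive (fun y => f y + g y) x (a + b).
Proof. intros H1 H2. exact (is_derive_plus f g x a b H1 H2). Qed.
Lemma dminus (f g : R -> R) x a b : is_derive f x a -> is_derive g x b ->
  is_derive (fun y => f y - g y) x (a - b).
Proof. intros H1 H2. exact (is_derive_minus f g x a b H1 H2). Qed.
Lemma dscal (f : R -> R) x k a : is_derive f x a -> is_derive (fun y => k * f y) x (k * a).
Proof. intros H. exact (is_derive_scal f x k a H). Qed.
Lemma dconst (c x : R) : is_derive (fun _ => c) x 0.
Proof. exact (is_derive_const (K:=R_AbsRing) c x). Qed.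
Lemma did (x : R) : is_derive (fun y => y) x 1.
Proof. exact (is_derive_id (K:=R_AbsRing) x). Qed.
Lemma dshift (f : R -> R) x c a : is_derive f (x + c) a -> is_derive (fun y => f (y + c)) x a.
Proof.
  intros H. apply (deq _ _ (scal 1 a)). 2: apply (scal_one a).
  apply (is_derive_comp f (fun y => y + c) x a 1 H).
  apply (deq _ _ (1 + 0)). 2: apply Rplus_0_r.
  apply dplus. apply did. apply dconst.
Qed.

Lemma cont_of_derive (G : R -> R) (x l : R) : is_derive G x l -> continuity_pt G x.
Proof.
  intro H. apply continuity_pt_filterlim. apply (ex_derive_continuous (K:=R_AbsRing) (V:=R_NormedModule)). exists l; exact H.
Qed.

Lemma prim (g : R -> R) : (forall x, continuity_pt g x) ->
  exists G : R -> R, forall x, is_derive G x (g x).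
Proof.
  intro Hc. exists (fun b => RInt g 0 b). intro x.
  apply (is_derive_RInt g (fun b => RInt g 0 b) 0 x).
  - apply filter_forall. intro b. apply (RInt_correct (V:=R_CompleteNormedModule)). apply (ex_RInt_continuous (V:=R_CompleteNormedModule)).
    intros z _. apply continuity_pt_filterlim. apply Hc.
  - apply continuity_pt_filterlim. apply Hc.
Qed.

Lemma mvt (G g : R -> R) a b : a <= b ->
  (forall x, a < x < b -> is_derive G x (g x)) ->
  (forall x, a <= x <= b -> continuity_pt G x) ->
  exists c, a <= c <= b /\ G b - G a = g c * (b - a).
Proof.
  intros Hab Hd Hc.
  destruct (MVT_gen G a b g) as [c [Hc1 Hc2]].
  - rewrite Rmin_left, Rmax_right by lra. exact Hd.
  - rewrite Rmin_left, Rmax_right by lra. exact Hc.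
  - rewrite Rmin_left, Rmax_right in Hc1 by lra. exists c; auto.
Qed.

Lemma mvtD (G g : R -> R) a b : a <= b ->
  (forall x, a <= x <= b -> is_derive G x (g x)) ->
  exists c, a <= c <= b /\ G b - G a = g c * (b - a).
Proof.
  intros Hab Hd. apply mvt; auto.
  - intros x Hx; apply Hd; lra.
  - intros x Hx; apply (cont_of_derive _ _ (g x)); auto.
Qed.

Lemma d2_mvt (G g h : R -> R) x e : 0 < e ->
  (forall y, x <= y <= x + 2*e -> is_derive G y (g y)) ->
  (forall y, x <= y <= x + 2*e -> is_derive g y (h y)) ->
  exists z, x <= z <= x + 2*e /\ G (x + 2*e) - 2 * G (x + e) + G x = e^2 * h z.
Proof.
  intros He HG Hg.
  destruct (mvtD (fun y => G (y + e) - G y) (fun y => g (y + e) - g y) x (x + e)) as [c [Hc1 Hc2]].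
  - lra.
  - intros y Hy. apply dminus. apply dshift, HG; lra. apply HG; lra.
  - destruct (mvtD g h c (c + e)) as [z [Hz1 Hz2]]. lra.
    intros y Hy; apply Hg; lra.
    exists z; split. lra.
    replace (x + 2*e) with (x + e + e) by ring.
    replace (c + e - c) with e in Hz2 by ring.
    replace (x + e - x) with e in Hc2 by ring.
    simpl. nra.
Qed.

Lemma dext (f g : R -> R) (x l : R) : (forall t : R, f t = g t) -> is_derive f x l -> is_derive g x l.
Proof. intros H1 H2. exact (is_derive_ext f g x l H1 H2). Qed.
Lemma dext_loc (f g : R -> R) (x l : R) : (exists r, 0 < r /\ forall t : R, Rabs (t - x) < r -> f t = g t) ->
  is_derive f x l -> is_derive g x l.
Proof.
  intros [r [Hr H1]] H2. apply is_derive_Reals in H2. apply is_derive_Reals.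
  intros eps Heps. destruct (H2 eps Heps) as [del Hdel].
  assert (Hm : 0 < Rmin del r) by (apply Rmin_pos; [apply cond_pos|lra]).
  exists (mkposreal _ Hm). intros h Hh Hhd. simpl in Hhd.
  rewrite <- !H1. apply Hdel; auto. eapply Rlt_le_trans. exact Hhd. apply Rmin_l.
  rewrite Rminus_diag, Rabs_R0; lra.
  replace (x + h - x) with h by ring. eapply Rlt_le_trans. exact Hhd. apply Rmin_r.
Qed.


Lemma deriv_on_open (D : R -> Prop) (g g' : R -> R) x :
  (exists r, 0 < r /\ forall y, Rabs (y - x) < r -> D y) ->
  deriv_on D g g' -> D x -> is_derive g x (g' x).
Proof.
  intros [r [Hr HD]] Hd Dx. apply is_derive_Reals. intros eps Heps.
  destruct (Hd x Dx eps Heps) as [alp [Halp H]].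
  assert (Hm : 0 < Rmin alp r) by (apply Rmin_pos; lra).
  exists (mkposreal _ Hm). intros h Hh Hhd. simpl in Hhd.
  assert (H1 := H (x + h)). simpl in H1. unfold R_dist in H1.
  replace (x + h - x) with h in H1 by ring.
  apply H1. split. split. apply HD. replace (x + h - x) with h by ring.
  apply Rlt_le_trans with (1 := Hhd). apply Rmin_r. lra.
  apply Rlt_le_trans with (1 := Hhd). apply Rmin_l.
Qed.

Lemma deriv_on_of (D : R -> Prop) (g g' : R -> R) :
  (forall x, D x -> is_derive g x (g' x)) -> deriv_on D g g'.
Proof.
  intros Hd x Dx eps Heps. destruct (proj1 (is_derive_Reals _ _ _) (Hd x Dx) eps Heps) as [del H].
  exists del. split. apply cond_pos. intros y [[Dy Hyx] Hd2]. simpl in Hd2. unfold R_dist in Hd2.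
  simpl. unfold R_dist.
  assert (H1 := H (y - x)). assert (E : forall a b : R, a + (b - a) = b) by (intros; ring). rewrite E in H1.
  apply H1. lra. exact Hd2.
Qed.

Lemma cont_on_of (D : R -> Prop) (g : R -> R) :
  (forall x, D x -> continuity_pt g x) -> cont_on D g.
Proof.
  intros Hc x Dx eps Heps. destruct (Hc x Dx eps Heps) as [alp [Halp H]].
  exists alp. split. exact Halp. intros y [Dy Hy].
  destruct (Req_dec y x) as [->|Hne].
  simpl; unfold R_dist; rewrite Rminus_diag, Rabs_R0; lra.
  apply H. split. split. exact I. auto. exact Hy.
Qed.

Lemma cont_open (D : R -> Prop) (g : R -> R) x :
  (exists r, 0 < r /\ forall y, Rabs (y - x) < r -> D y) ->
  cont_on D g -> D x -> continuity_pt g x.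
Proof.
  intros [r [Hr HD]] Hc Dx eps Heps. destruct (Hc x Dx eps Heps) as [alp [Halp H]].
  exists (Rmin alp r). split. apply Rmin_pos; lra. intros y [_ Hy].
  simpl in Hy; unfold R_dist in Hy. apply H. split. apply HD.
  apply Rlt_le_trans with (1 := Hy). apply Rmin_r.
  simpl; unfold R_dist. apply Rlt_le_trans with (1 := Hy). apply Rmin_l.
Qed.

Lemma Ioi_open c x : c < x -> exists r, 0 < r /\ forall y, Rabs (y - x) < r -> Ioi c y.
Proof.
  intros H. exists (x - c). split. lra. intros y Hy. unfold Ioi.
  apply Rabs_def2 in Hy. lra.
Qed.

Lemma Rabs_max0 x y : Rabs (Rmax 0 y - Rmax 0 x) <= Rabs (y - x).
Proof.
  unfold Rmax. destruct (Rle_dec 0 y); destruct (Rle_dec 0 x);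
  unfold Rabs; repeat destruct Rcase_abs; lra.
Qed.

Lemma cont_ext (g : R -> R) : cont_on Ici0 g -> forall x, continuity_pt (fun y => g (Rmax 0 y)) x.
Proof.
  intros Hc x eps Heps.
  assert (Dx : Ici0 (Rmax 0 x)) by (unfold Ici0; apply Rmax_l).
  destruct (Hc _ Dx eps Heps) as [alp [Halp H]].
  exists alp. split. exact Halp. intros y [_ Hy]. simpl in Hy |- *. unfold R_dist in Hy |- *.
  apply H. split. unfold Ici0; apply Rmax_l. simpl; unfold R_dist.
  eapply Rle_lt_trans. apply Rabs_max0. exact Hy.
Qed.

Lemma deriv_ext (g g1 : R -> R) : deriv_on Ici0 g g1 -> g1 0 = 0 ->
  forall x, is_derive (fun y => g (Rmax 0 y)) x (g1 (Rmax 0 x)).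
Proof.
  intros Hd H0 x. apply is_derive_Reals.
  destruct (Rlt_le_dec 0 x) as [Hx|Hx].
  - rewrite Rmax_right by lra.
    intros eps Heps.
    destruct (Hd x (Rlt_le _ _ Hx) eps Heps) as [alp [Halp H]].
    assert (Hm : 0 < Rmin alp x) by (apply Rmin_pos; lra).
    exists (mkposreal _ Hm). intros h Hh Hhd. simpl in Hhd.
    assert (Hh2 : Rabs h < alp /\ Rabs h < x) by (split; eapply Rlt_le_trans; eauto; [apply Rmin_l|apply Rmin_r]).
    assert (0 <= x + h) by (destruct Hh2 as [_ Hh2]; apply Rabs_def2 in Hh2; lra).
    rewrite Rmax_right by lra. rewrite Rmax_right by lra.
    assert (H2 := H (x + h)). simpl in H2. unfold R_dist in H2.
    replace (x + h - x) with h in H2 by ring. apply H2.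
    split. split. unfold Ici0; lra. lra. replace (x + h - x) with h by ring. tauto.
  - destruct (Rlt_le_dec x 0) as [Hx2|Hx2].
    + rewrite (Rmax_left 0 x) by lra. rewrite H0. intros eps Heps.
      assert (Hm : 0 < - x) by lra.
      exists (mkposreal _ Hm). intros h Hh Hhd. simpl in Hhd.
      apply Rabs_def2 in Hhd.
      rewrite (Rmax_left 0 (x+h)) by lra. rewrite (Rmax_left 0 x) by lra.
      replace ((g 0 - g 0) / h - 0) with 0 by (field; auto). rewrite Rabs_R0; lra.
    + assert (x = 0) by lra. subst x. rewrite Rmax_left by lra. rewrite H0.
      intros eps Heps.
      destruct (Hd 0 (Rle_refl 0) eps Heps) as [alp [Halp H]].
      exists (mkposreal _ Halp). intros h Hh Hhd. simpl in Hhd.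
      rewrite Rplus_0_l. rewrite (Rmax_left 0 0) by lra.
      destruct (Rlt_le_dec 0 h) as [Hxh|Hxh].
      * rewrite (Rmax_right 0 h) by lra.
        assert (H1 := H h). simpl in H1. unfold R_dist in H1. rewrite H0 in H1.
        replace (h - 0) with h in H1 by ring. apply H1.
        split. split. unfold Ici0; lra. lra. exact Hhd.
      * rewrite (Rmax_left 0 h) by lra.
        replace ((g 0 - g 0) / h - 0) with 0 by (field; auto). rewrite Rabs_R0; lra.
Qed.


Lemma mvt_nondecr (G g : R -> R) a b : a <= b ->
  (forall x, a <= x <= b -> is_derive G x (g x)) ->
  (forall x, a <= x <= b -> 0 <= g x) -> G a <= G b.
Proof.
  intros Hab Hd Hg. destruct (mvtD G g a b Hab Hd) as [c [Hc E]].
  assert (0 <= g c * (b - a)) by (apply Rmult_le_pos; [apply Hg; lra | lra]). lra.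
Qed.

Lemma d2_rep (G g : R -> R) x e : 0 < e ->
  (forall y, x <= y <= x + 2*e -> is_derive G y (g y)) ->
  exists z1 z2, x <= z1 <= x + e /\ x + e <= z2 <= x + 2*e /\
    G (x + 2*e) - 2 * G (x + e) + G x = e * (g z2 - g z1).
Proof.
  intros He Hd.
  destruct (mvtD G g x (x+e)) as [z1 [Hz1 E1]]. lra. intros; apply Hd; lra.
  destruct (mvtD G g (x+e) (x+2*e)) as [z2 [Hz2 E2]]. lra. intros; apply Hd; lra.
  exists z1, z2. split. lra. split. lra.
  replace (x + e - x) with e in E1 by ring. replace (x + 2*e - (x + e)) with e in E2 by ring.
  lra.
Qed.

Definition D2 (G : R -> R) (e x : R) := (G (x + 2*e) - 2 * G (x + e) + G x) / e^2.

Lemma dD2 (G g : R -> R) e x : (forall y, is_derive G y (g y)) ->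
  is_derive (D2 G e) x (D2 g e x).
Proof.
  intros Hd.
  assert (E : D2 g e x = / e^2 * (g (x + 2*e) - 2 * g (x + e) + g x)) by (unfold D2, Rdiv; ring).
  rewrite E.
  apply (dext (fun y => / e^2 * (G (y + 2*e) - 2 * G (y + e) + G y))).
  intro t. unfold D2, Rdiv. ring.
  apply dscal. apply dplus. apply dminus. apply dshift, Hd. apply dscal, dshift, Hd. apply Hd.
Qed.

Lemma cshift (g : R -> R) x c : continuity_pt g (x + c) -> continuity_pt (fun y => g (y + c)) x.
Proof.
  intros H. apply (continuity_pt_comp (fun y => y + c) g).
  apply (continuity_pt_plus (fun y => y) (fun _ => c)). apply derivable_continuous_pt, derivable_pt_id.
  apply continuity_pt_const. intros a b; auto. exact H.
Qed.
Lemma clin (g1 g2 : R -> R) a b x : continuity_pt g1 x -> continuity_pt g2 x ->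
  continuity_pt (fun y => a * g1 y + b * g2 y) x.
Proof.
  intros H1 H2. apply (continuity_pt_plus (fun y => a * g1 y) (fun y => b * g2 y)).
  apply (continuity_pt_scal g1 a x H1). apply (continuity_pt_scal g2 b x H2).
Qed.
Lemma cext (g1 g2 : R -> R) x : (forall y, g1 y = g2 y) -> continuity_pt g1 x -> continuity_pt g2 x.
Proof. intros E H. apply (continuity_pt_ext g1 g2 x E H). Qed.

Lemma cD2 (g : R -> R) e x : (forall y, continuity_pt g y) -> continuity_pt (D2 g e) x.
Proof.
  intros Hc.
  apply (cext (fun y => / e^2 * (1 * (1 * g (y + 2*e) + (-2) * g (y + e)) + 1 * g y) + 0 * g y)).
  intro y; unfold D2, Rdiv; ring.
  apply clin. 2: apply Hc.
  apply clin. 2: apply Hc. apply clin; apply cshift, Hc.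
Qed.


Definition q (s:R) := s^2/(1+s^2).
Definition q1 (s:R) := 2*s/(1+s^2)^2.
Definition q2 (s:R) := (2 - 6*s^2)/(1+s^2)^3.
Lemma dq (s : R) : is_derive q s (q1 s).
Proof. unfold q, q1. auto_derive. nra. field. nra. Qed.
Lemma dq1 (s : R) : is_derive q1 s (q2 s).
Proof. unfold q2, q1. auto_derive. nra. field. nra. Qed.
Lemma cq2 s : continuity_pt q2 s.
Proof. apply continuity_pt_filterlim. apply (ex_derive_continuous (K:=R_AbsRing) (V:=R_NormedModule)). unfold q2. auto_derive. nra. Qed.
Lemma cq s : continuity_pt q s.
Proof. apply (cont_of_derive _ _ _ (dq s)). Qed.
Lemma cq1 s : continuity_pt q1 s.
Proof. apply (cont_of_derive _ _ _ (dq1 s)). Qed.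

Lemma q_bounds s : 0 <= q s <= 1.
Proof. unfold q. assert (0 < 1 + s^2) by nra. split. apply Rdiv_le_0_compat; nra.
  apply Rmult_le_reg_r with (1 + s^2). lra. unfold Rdiv. rewrite Rmult_assoc, Rinv_l by lra. nra. Qed.
Lemma q_le s : q s <= s^2.
Proof. unfold q. assert (0 < 1 + s^2) by nra.
  apply Rmult_le_reg_r with (1 + s^2). lra. unfold Rdiv. rewrite Rmult_assoc, Rinv_l by lra. nra. Qed.
Lemma q1_bounds s : 0 <= s -> 0 <= q1 s <= 1.
Proof. intro Hs. unfold q1. assert (0 < 1 + s^2) by nra. assert (0 < (1 + s^2)^2) by nra. split. apply Rdiv_le_0_compat; nra.
  apply Rmult_le_reg_r with ((1 + s^2)^2). lra. unfold Rdiv. rewrite Rmult_assoc, Rinv_l by lra. nra. Qed.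
Lemma q1_pos s : 0 < s -> 0 < q1 s.
Proof. intro Hs. unfold q1. assert (0 < (1 + s^2)^2) by nra. apply Rdiv_lt_0_compat; nra. Qed.
Lemma q_pos s : 0 < s -> 0 < q s.
Proof. intro Hs. unfold q. apply Rdiv_lt_0_compat; nra. Qed.

Definition dn (n : nat) := / (INR n + 1)^2.
Definition p (n : nat) (s : R) := dn n * q s ^ (n+2).
Definition p1 (n : nat) (s : R) := dn n * INR (n+2) * q s ^ (n+1) * q1 s.
Definition p2 (n : nat) (s : R) := dn n * INR (n+2) * (INR (n+1) * q s ^ n * q1 s ^ 2 + q s ^ (n+1) * q2 s).

Lemma dn_pos n : 0 < dn n.
Proof. unfold dn. apply Rinv_0_lt_compat. pose proof (pos_INR n). nra. Qed.

Lemma dp n (s : R) : is_derive (p n) s (p1 n s).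
Proof.
  unfold p, p1.
  apply (deq _ _ (dn n * (INR (n+2) * q1 s * q s ^ Init.Nat.pred (n+2)))).
  2: replace (Init.Nat.pred (n+2)) with (n+1)%nat by lia; ring.
  apply dscal. apply is_derive_pow. apply dq.
Qed.

Lemma dp1 n (s : R) : is_derive (p1 n) s (p2 n s).
Proof.
  unfold p1, p2.
  apply (dext (fun s => dn n * INR (n+2) * (q s ^ (n+1) * q1 s))). intro; ring.
  apply (deq _ _ (dn n * INR (n+2) * ((INR (n+1) * q1 s * q s ^ Init.Nat.pred (n+1)) * q1 s + q s ^ (n+1) * q2 s))).
  2: replace (Init.Nat.pred (n+1)) with n by lia; ring.
  apply dscal. apply (is_derive_mult (K:=R_AbsRing) (fun s => q s ^ (n+1)) q1).
  apply is_derive_pow. apply dq. apply dq1. intros; apply Rmult_comm.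
Qed.

Lemma pow_le1 x k : 0 <= x <= 1 -> x ^ (S k) <= x ^ k.
Proof. intros H. simpl. pose proof (pow_le x k (proj1 H)). nra. Qed.
Lemma pow_le1' x k : 0 <= x <= 1 -> x ^ (S k) <= x.
Proof. intros H. induction k. simpl; lra. eapply Rle_trans. apply pow_le1; auto. auto. Qed.

Lemma pp0 n : p n 0 = 0.
Proof. unfold p, q. replace (0^2/(1+0^2)) with 0 by field. rewrite pow_i by lia. ring. Qed.
Lemma pp_nonneg n s : 0 <= p n s.
Proof. unfold p. apply Rmult_le_pos. apply Rlt_le, dn_pos. apply pow_le, q_bounds. Qed.
Lemma pp1_nonneg n s : 0 <= s -> 0 <= p1 n s.
Proof. intro Hs. unfold p1. pose proof (dn_pos n). pose proof (pos_INR (n+2)).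
  pose proof (pow_le _ (n+1) (proj1 (q_bounds s))). pose proof (q1_bounds s Hs).
  apply Rmult_le_pos. apply Rmult_le_pos. nra. lra. lra. Qed.
Lemma pp1_pos n s : 0 < s -> 0 < p1 n s.
Proof. intro Hs. unfold p1. pose proof (dn_pos n). assert (0 < INR (n+2)) by (apply lt_0_INR; lia).
  pose proof (pow_lt _ (n+1) (q_pos s Hs)). pose proof (q1_pos s Hs).
  apply Rmult_lt_0_compat. apply Rmult_lt_0_compat. nra. lra. lra. Qed.
Lemma dn_mono n : dn (S n) <= dn n.
Proof. unfold dn. rewrite S_INR. pose proof (pos_INR n). apply Rinv_le_contravar. nra. nra. Qed.
Lemma pp_mono n s : p (S n) s <= p n s.
Proof. unfold p. pose proof (dn_mono n). pose proof (dn_pos (S n)).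
  pose proof (pow_le _ (n+2) (proj1 (q_bounds s))).
  replace (S n + 2)%nat with (S (n+2)) by lia.
  pose proof (pow_le1 _ (n+2) (q_bounds s)). nra. Qed.
Lemma pp_le n s : p n s <= dn n.
Proof. unfold p. pose proof (dn_pos n). replace (n+2)%nat with (S (n+1)) by lia.
  pose proof (pow_le1' _ (n+1) (q_bounds s)). pose proof (q_bounds s). nra. Qed.
Lemma pp_s n s : p n s <= dn n * s^2.
Proof. unfold p. pose proof (dn_pos n). replace (n+2)%nat with (S (n+1)) by lia.
  pose proof (pow_le1' _ (n+1) (q_bounds s)). pose proof (q_le s). nra. Qed.
Lemma pp1_le n s : 0 <= s -> p1 n s <= dn n * INR (n+2).
Proof. intro Hs. unfold p1. pose proof (dn_pos n). pose proof (pos_INR (n+2)).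
  pose proof (pow_le _ (n+1) (proj1 (q_bounds s))). pose proof (q1_bounds s Hs).
  pose proof (pow_le1' _ n (q_bounds s)). replace (n+1)%nat with (S n) in * by lia.
  pose proof (q_bounds s).
  assert (q s ^ S n * q1 s <= 1) by nra.
  assert (0 <= dn n * INR (n+2)) by nra. 
  replace (dn n * INR (n + 2) * q s ^ S n * q1 s) with (dn n * INR (n+2) * (q s ^ S n * q1 s)) by ring.
  nra. Qed.
Lemma pp_ratio n s : p n s * (2 * INR (n+2)) = p1 n s * s * (1 + s^2).
Proof. unfold p, p1. replace (n+2)%nat with (S (n+1)) at 1 by lia. simpl pow at 1.
  unfold q1. unfold q at 1. assert (0 < 1 + s^2) by nra. field. lra. Qed.
Lemma pp_v n s : 0 <= s -> Rabs (s * p1 n s - p n s) <= dn n * (2 * INR (n+2) + 1) * s^4.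
Proof.
  intro Hs. unfold p, p1.
  replace (n+2)%nat with (S (n+1)) at 2 by lia. simpl pow at 2.
  pose proof (dn_pos n). pose proof (pos_INR (n+2)).
  set (m := INR (n+2)) in *.
  replace (s * (dn n * m * q s ^ (n + 1) * q1 s) - dn n * (q s * q s ^ (n + 1)))
    with (dn n * q s ^ (n+1) * (m * (s * q1 s) - q s)) by ring.
  pose proof (q_bounds s). pose proof (q_le s).
  pose proof (pow_le _ (n+1) (proj1 (q_bounds s))).
  replace (n+1)%nat with (S n) in * by lia.
  pose proof (pow_le1' _ n (q_bounds s)).
  assert (Hq1 : 0 <= s * q1 s <= 2 * s^2).
  { unfold q1. assert (0 < 1 + s^2) by nra. assert (1 <= (1+s^2)^2) by nra. split.
    apply Rmult_le_pos. lra. apply Rdiv_le_0_compat; nra.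
    replace (s * (2 * s / (1 + s ^ 2) ^ 2)) with (2 * s^2 / (1 + s^2)^2) by (field; lra).
    apply Rmult_le_reg_r with ((1 + s^2)^2). nra. unfold Rdiv. rewrite Rmult_assoc, Rinv_l by nra. nra. }
  rewrite Rabs_mult. rewrite (Rabs_right (dn n * q s ^ S n)) by nra.
  assert (Rabs (m * (s * q1 s) - q s) <= (2*m+1) * s^2).
  { unfold Rabs; destruct Rcase_abs; nra. }
  assert (0 <= dn n * q s ^ S n <= dn n * s^2) by nra.
  assert (0 <= Rabs (m * (s * q1 s) - q s)) by apply Rabs_pos.
  replace (dn n * (2 * m + 1) * s ^ 4) with ((dn n * s^2) * ((2*m+1) * s^2)) by ring.
  apply Rmult_le_compat; nra.
Qed.

Definition en (sg : R) (n : nat) := sg / 2 ^ (n + 2).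
Lemma en_pos sg n : 0 < sg -> 0 < en sg n.
Proof. intro. unfold en. apply Rdiv_lt_0_compat. lra. apply pow_lt; lra. Qed.
Lemma en_S sg n : en sg (S n) = en sg n / 2.
Proof. unfold en. replace (S n + 2)%nat with (S (n+2)) by lia. simpl pow.
  assert (0 < 2^(n+2)) by (apply pow_lt; lra). field. lra. Qed.
Lemma pow2_ge n : INR n + 1 <= 2 ^ n.
Proof. induction n. simpl; lra. rewrite S_INR. simpl pow. pose proof (pos_INR n). lra. Qed.
Lemma en_le sg n : 0 < sg -> en sg n <= sg / 4.
Proof. intro. unfold en. rewrite pow_add. simpl pow.
  pose proof (pow2_ge n). pose proof (pos_INR n). apply Rmult_le_compat_l. lra.
  apply Rinv_le_contravar; nra. Qed.
Lemma en_le2 sg n : 0 < sg -> en sg n <= sg / (INR n + 1).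
Proof. intro. unfold en. rewrite pow_add. simpl pow.
  pose proof (pow2_ge n). pose proof (pos_INR n). apply Rmult_le_compat_l. lra.
  apply Rinv_le_contravar; nra. Qed.

Lemma small sg : 0 < sg -> forall g, 0 < g -> exists N, forall n, (N <= n)%nat ->
  en sg n <= g /\ dn n * (2 * INR (n+2) + 1) <= g /\ / INR (n+2) <= g.
Proof.
  intros Hs g Hg. destruct (INR_unbounded ((sg + 5) / g)) as [N HN].
  exists N. intros n Hn. apply le_INR in Hn. pose proof (pos_INR N).
  assert (Hc : (sg + 5) / (INR n + 1) <= g).
  { apply Rmult_le_reg_r with (INR n + 1). lra. unfold Rdiv. rewrite Rmult_assoc, Rinv_l by lra.
    apply Rmult_le_reg_r with (/ g). apply Rinv_0_lt_compat; lra.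
    replace (g * (INR n + 1) * / g) with (INR n + 1) by (field; lra). unfold Rdiv in HN. lra. }
  assert (E2 : INR (n+2) = INR n + 2) by (rewrite plus_INR; simpl; ring).
  pose proof (pos_INR n).
  split; [|split].
  - eapply Rle_trans. apply en_le2; auto. eapply Rle_trans. 2: exact Hc.
    unfold Rdiv. apply Rmult_le_compat_r. apply Rlt_le, Rinv_0_lt_compat; lra. lra.
  - eapply Rle_trans. 2: exact Hc. unfold dn. rewrite E2.
    replace (/ (INR n + 1) ^ 2 * (2 * (INR n + 2) + 1)) with ((2 * INR n + 5) / (INR n + 1) * / (INR n + 1)) by (field; lra).
    unfold Rdiv. apply Rmult_le_compat_r. apply Rlt_le, Rinv_0_lt_compat; lra.
    apply Rmult_le_reg_r with (INR n + 1). lra. rewrite Rmult_assoc, Rinv_l by lra. nra.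
  - eapply Rle_trans. 2: exact Hc. rewrite E2. apply Rmult_le_reg_r with ((INR n + 2)*(INR n + 1)). nra.
    unfold Rdiv. replace (/ (INR n + 2) * ((INR n + 2) * (INR n + 1))) with (INR n + 1) by (field; lra).
    replace ((sg + 5) * / (INR n + 1) * ((INR n + 2) * (INR n + 1))) with ((sg+5) * (INR n + 2)) by (field; lra).
    nra.
Qed.


Definition fe (g : R -> R) (x : R) := g (Rmax 0 x).

Ltac dA HA := destruct HA as (Hs & Hconv & Hmon & Hd & Hc1 & Hd2 & Hd3 & Hc3 & Hf0 & Hsup & Hz & Hpos).

Lemma fe_pos (g : R -> R) x : 0 <= x -> fe g x = g x.
Proof. intro. unfold fe. rewrite Rmax_right; auto. Qed.


Lemma A1 sigma f f1 f2 f3 : assumptions_A sigma f f1 f2 f3 -> forall x, is_derive (fe f) x (fe f1 x).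
Proof. intro HA; dA HA. intro x. apply (deriv_ext f f1 Hd). apply Hz; lra. Qed.
Lemma A2 sigma f f1 f2 f3 : assumptions_A sigma f f1 f2 f3 -> forall x, continuity_pt (fe f1) x.
Proof. intro HA; dA HA. intro x. apply (cont_ext f1 Hc1). Qed.
Lemma A3 sigma f f1 f2 f3 : assumptions_A sigma f f1 f2 f3 -> forall x, sigma < x -> is_derive f1 x (f2 x).
Proof. intro HA; dA HA. intros x Hx. apply (deriv_on_open (Ioi sigma)); auto. apply Ioi_open; auto. Qed.
Lemma A4 sigma f f1 f2 f3 : assumptions_A sigma f f1 f2 f3 -> forall x, sigma < x -> is_derive f2 x (f3 x).
Proof. intro HA; dA HA. intros x Hx. apply (deriv_on_open (Ioi sigma)); auto. apply Ioi_open; auto. Qed.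
Lemma A5 sigma f f1 f2 f3 : assumptions_A sigma f f1 f2 f3 -> forall x, sigma < x -> continuity_pt f2 x.
Proof. intros HA x Hx. apply (cont_of_derive _ _ _ (A4 _ _ _ _ _ HA x Hx)). Qed.
Lemma A6 sigma f f1 f2 f3 : assumptions_A sigma f f1 f2 f3 -> forall x, x <= sigma -> fe f1 x = 0.
Proof. intro HA; dA HA. intros x Hx. unfold fe. apply Hz. split. apply Rmax_l.
  apply Rmax_lub; lra. Qed.
Lemma A7 sigma f f1 f2 f3 : assumptions_A sigma f f1 f2 f3 -> forall x, x <= sigma -> fe f x = 0.
Proof. intros HA x Hx. pose proof (A1 _ _ _ _ _ HA) as D. pose proof (A6 _ _ _ _ _ HA) as Z.
  assert (E0 : fe f 0 = 0) by (dA HA; rewrite fe_pos by lra; auto).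
  destruct (Rle_dec x 0) as [Hx0|Hx0].
  unfold fe. rewrite Rmax_left by lra. unfold fe in E0. rewrite Rmax_left in E0 by lra. auto.
  destruct (mvtD (fe f) (fe f1) 0 x) as [c [Hc E]]. lra. intros; apply D.
  rewrite Z in E by lra. lra. Qed.
Lemma A8 sigma f f1 f2 f3 : assumptions_A sigma f f1 f2 f3 -> forall x, sigma < x -> is_derive (fe f1) x (f2 x).
Proof. intros HA x Hx. assert (Hs0 : 0 < sigma) by (dA HA; auto).
  apply (dext_loc f1). exists (x - sigma). split. lra. intros t Ht. apply Rabs_def2 in Ht.
  rewrite fe_pos by lra. auto. apply (A3 _ _ _ _ _ HA x Hx). Qed.
Lemma A9 sigma f f1 f2 f3 : assumptions_A sigma f f1 f2 f3 -> forall x y, sigma <= x -> x < y -> fe f1 x < fe f1 y.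
Proof. intros HA x y Hx Hxy.
  destruct (mvt (fe f1) (fun u => if Rlt_dec sigma u then f2 u else 1) x y) as [c [Hc E]].
  lra. intros u Hu. destruct (Rlt_dec sigma u). apply (A8 _ _ _ _ _ HA); auto. lra.
  intros; apply (A2 _ _ _ _ _ HA).
  destruct (Rlt_dec sigma c). assert (0 < f2 c) by (dA HA; auto). nra. nra. Qed.
Lemma A10 sigma f f1 f2 f3 : assumptions_A sigma f f1 f2 f3 -> forall x y, x <= y -> fe f1 x <= fe f1 y.
Proof. intros HA x y Hxy. destruct (Rle_dec y sigma).
  rewrite !(A6 _ _ _ _ _ HA) by lra. lra.
  destruct (Rle_dec x sigma).
  rewrite (A6 _ _ _ _ _ HA x) by lra. rewrite <- (A6 _ _ _ _ _ HA sigma) by lra.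
  apply Rlt_le, (A9 _ _ _ _ _ HA); lra.
  destruct (Req_dec x y). subst; lra. apply Rlt_le, (A9 _ _ _ _ _ HA); lra. Qed.
Lemma A11 sigma f f1 f2 f3 : assumptions_A sigma f f1 f2 f3 -> forall x, 0 <= fe f1 x.
Proof. intros HA x. assert (Hs : 0 < sigma) by (dA HA; auto).
  rewrite <- (A6 _ _ _ _ _ HA (-1)) by lra. destruct (Rle_dec (-1) x).
  apply (A10 _ _ _ _ _ HA); lra. unfold fe. rewrite !Rmax_left by lra. lra. Qed.

Lemma a_eq sigma f f1 f2 f3 : assumptions_A sigma f f1 f2 f3 -> forall u, sigma < u ->
  f1 u = u * a_fun sigma f1 f2 u * f2 u.
Proof. intros HA u Hu. assert (0 < f2 u) by (dA HA; auto). assert (0 < sigma) by (dA HA; auto).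
  unfold a_fun. destruct (Rlt_dec sigma u); [|lra]. field. split; lra. Qed.
Lemma a_zero sigma f1 f2 u : u <= sigma -> a_fun sigma f1 f2 u = 0.
Proof. intros. unfold a_fun. destruct (Rlt_dec sigma u); [lra|auto]. Qed.
Lemma a_nonneg sigma f f1 f2 f3 : assumptions_A sigma f f1 f2 f3 -> forall u, 0 <= a_fun sigma f1 f2 u.
Proof. intros HA u. unfold a_fun. destruct (Rlt_dec sigma u); [|lra].
  assert (0 < f2 u) by (dA HA; auto). assert (0 < sigma) by (dA HA; auto).
  pose proof (A11 _ _ _ _ _ HA u). rewrite fe_pos in H1 by lra.
  apply Rdiv_le_0_compat; nra. Qed.

Lemma A12 sigma f f1 f2 f3 tsig : assumptions_A sigma f f1 f2 f3 -> sigma < tsig ->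
  nondecr_on (fun s => sigma <= s <= tsig) (a_fun sigma f1 f2) ->
  forall eps, 0 < eps -> exists eta, 0 < eta /\ sigma + eta <= tsig /\ a_fun sigma f1 f2 (sigma + eta) < eps.
Proof.
  intros HA Ht Hnd eps Heps.
  assert (Hs0 : 0 < sigma) by (dA HA; auto).
  apply NNPP. intro Hno.
  assert (Hge : forall u, sigma < u <= tsig -> eps <= a_fun sigma f1 f2 u).
  { intros u Hu. apply Rnot_lt_le. intro Hlt. apply Hno. exists (u - sigma).
    split. lra. split. lra. replace (sigma + (u - sigma)) with u by ring. auto. }
  set (L := / (sigma * eps)).
  assert (HL : 0 < L) by (apply Rinv_0_lt_compat; nra).
  assert (Hf2 : forall u, sigma < u <= tsig -> f2 u <= L * f1 u).
  { intros u Hu. rewrite (a_eq _ _ _ _ _ HA u) by lra.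
    assert (0 < f2 u) by (dA HA; apply Hpos; lra). pose proof (Hge u Hu).
    unfold L. replace (/ (sigma * eps) * (u * a_fun sigma f1 f2 u * f2 u))
      with ((u * a_fun sigma f1 f2 u) / (sigma * eps) * f2 u) by (field; lra).
    assert (sigma * eps <= u * a_fun sigma f1 f2 u) by nra.
    assert (1 <= (u * a_fun sigma f1 f2 u) / (sigma * eps)).
    { apply Rmult_le_reg_r with (sigma * eps). nra. unfold Rdiv. rewrite Rmult_assoc, Rinv_l by nra. lra. }
    nra. }
  set (h := fun u => fe f1 u * exp (- L * u)).
  assert (Hh : forall u, sigma < u < tsig -> h tsig <= h u).
  { intros u Hu.
    destruct (mvtD h (fun w => (f2 w - L * fe f1 w) * exp (- L * w)) u tsig) as [c [Hc E]]. lra.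
    intros w Hw. unfold h.
    apply (deq _ _ (f2 w * exp (- L * w) + fe f1 w * ((- L * 1) * exp (- L * w)))).
    2: ring.
    apply (is_derive_mult (K:=R_AbsRing) (fe f1) (fun w => exp (- L * w))). apply (A8 _ _ _ _ _ HA); lra.
    apply (is_derive_comp exp (fun w => - L * w)). apply is_derive_exp. apply dscal, did.
    intros; apply Rmult_comm.
    assert ((f2 c - L * fe f1 c) <= 0). { rewrite fe_pos by lra. pose proof (Hf2 c). lra. }
    pose proof (exp_pos (- L * c)). assert ((f2 c - L * fe f1 c) * exp (- L * c) <= 0) by nra.
    nra. }
  assert (Hk : 0 < h tsig).
  { unfold h. apply Rmult_lt_0_compat. rewrite <- (A6 _ _ _ _ _ HA sigma) by lra.
    apply (A9 _ _ _ _ _ HA); lra. apply exp_pos. }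
  destruct (A2 _ _ _ _ _ HA sigma (h tsig)) as [del [Hdel Hc]]. lra.
  set (u := sigma + Rmin del (tsig - sigma) / 2).
  assert (Hm : 0 < Rmin del (tsig - sigma)) by (apply Rmin_pos; lra).
  assert (Hu : sigma < u < tsig) by (unfold u; pose proof (Rmin_r del (tsig - sigma)); lra).
  assert (Hc2 := Hc u). simpl in Hc2. unfold R_dist in Hc2.
  rewrite (A6 _ _ _ _ _ HA sigma) in Hc2 by lra.
  assert (Hlt : Rabs (fe f1 u - 0) < h tsig).
  { apply Hc2. split. split. exact I. lra. unfold u.
    rewrite Rabs_right by (apply Rle_ge; lra). pose proof (Rmin_l del (tsig - sigma)). lra. }
  pose proof (Hh u Hu). unfold h in H.
  assert (0 < L * u) by nra.
  assert (exp (- L * u) <= 1). { rewrite <- exp_0. replace (- L * u) with (- (L*u)) by ring.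
    destruct (Rle_lt_or_eq_dec _ _ (Rlt_le _ _ (exp_increasing (- (L*u)) 0 ltac:(lra)))); lra. }
  pose proof (A11 _ _ _ _ _ HA u). rewrite Rminus_0_r, Rabs_right in Hlt by lra.
  pose proof (exp_pos (- L * u)). unfold h in Hk, Hlt. nra.
Qed.

Lemma A13 sigma f f1 f2 f3 tsig (F : R -> R) s e : assumptions_A sigma f f1 f2 f3 -> sigma < tsig ->
  nondecr_on (fun s => sigma <= s <= tsig) (a_fun sigma f1 f2) ->
  (forall x, is_derive F x (fe f x)) -> 0 < e -> s + 2*e <= tsig ->
  D2 F e s <= ((s + 2*e) * a_fun sigma f1 f2 (s + 2*e)) * D2 (fe f) e s.
Proof.
  intros HA Ht Hnd HF He Hse.
  assert (Hs0 : 0 < sigma) by (dA HA; auto).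
  set (c := (s + 2*e) * a_fun sigma f1 f2 (s + 2*e)).
  set (phi := fun x => fe f x - c * fe f1 x).
  assert (Hphi : forall u v, s <= u -> u <= v -> v <= s + 2*e -> phi v <= phi u).
  { intros u v Hu Huv Hv.
    destruct (Rle_dec v sigma).
    - unfold phi. rewrite !(A7 _ _ _ _ _ HA), !(A6 _ _ _ _ _ HA) by lra. lra.
    - set (w := Rmax u sigma).
      assert (Hw : phi w <= phi u).
      { unfold w, Rmax. destruct (Rle_dec u sigma). unfold phi.
        rewrite !(A7 _ _ _ _ _ HA), !(A6 _ _ _ _ _ HA) by lra. lra. lra. }
      assert (Hw1 : sigma <= w) by (unfold w; apply Rmax_r).
      assert (Hw2 : w <= v) by (unfold w; apply Rmax_lub; lra).
      destruct (mvt phi (fun x => if Rlt_dec sigma x then fe f1 x - c * f2 x else 0) w v) as [z [Hzz E]].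
      lra.
      + intros x Hx. destruct (Rlt_dec sigma x); [|lra]. unfold phi.
        apply dminus. apply (A1 _ _ _ _ _ HA). apply dscal, (A8 _ _ _ _ _ HA); lra.
      + intros x Hx. unfold phi. apply (cext (fun y => 1 * fe f y + (- c) * fe f1 y)).
        intro; ring. apply clin. apply (cont_of_derive _ _ _ (A1 _ _ _ _ _ HA x)). apply (A2 _ _ _ _ _ HA).
      + assert (Hd : (if Rlt_dec sigma z then fe f1 z - c * f2 z else 0) <= 0).
        { destruct (Rlt_dec sigma z); [|lra].
          rewrite fe_pos by lra. rewrite (a_eq _ _ _ _ _ HA z) by lra.
          assert (0 < f2 z) by (dA HA; apply Hpos; lra).
          assert (z * a_fun sigma f1 f2 z <= c).
          { unfold c. pose proof (a_nonneg _ _ _ _ _ HA z).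
            assert (a_fun sigma f1 f2 z <= a_fun sigma f1 f2 (s + 2*e)).
            { apply Hnd; [split;lra|split;lra|lra]. }
            apply Rmult_le_compat; lra. }
          nra. }
        nra. }
  destruct (d2_rep (fun x => F x - c * fe f x) phi s e He) as [z1 [z2 [Hz1 [Hz2 E]]]].
  { intros y Hy. unfold phi. apply dminus. apply HF. apply dscal, (A1 _ _ _ _ _ HA). }
  assert (phi z2 <= phi z1) by (apply Hphi; lra).
  unfold D2. assert (0 < e^2) by nra.
  apply Rmult_le_reg_r with (e^2). auto.
  replace (c * ((fe f (s + 2 * e) - 2 * fe f (s + e) + fe f s) / e ^ 2) * e ^ 2)
    with (c * (fe f (s + 2 * e) - 2 * fe f (s + e) + fe f s)) by (field; lra).
  replace ((F (s + 2 * e) - 2 * F (s + e) + F s) / e ^ 2 * e ^ 2)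
    with (F (s + 2 * e) - 2 * F (s + e) + F s) by (field; lra).
  nra.
Qed.

Lemma A14a sigma f f1 f2 f3 (F : R -> R) s e : assumptions_A sigma f f1 f2 f3 ->
  (forall x, is_derive F x (fe f x)) -> 0 < e ->
  exists z, s <= z <= s + 2*e /\ D2 F e s = fe f1 z.
Proof.
  intros HA HF He. destruct (d2_mvt F (fe f) (fe f1) s e He) as [z [Hz E]].
  intros; apply HF. intros; apply (A1 _ _ _ _ _ HA).
  exists z. split. auto. unfold D2. rewrite E. field. lra.
Qed.

Lemma A14b sigma f f1 f2 f3 s e : assumptions_A sigma f f1 f2 f3 -> 0 < e -> 0 <= D2 (fe f) e s.
Proof.
  intros HA He. destruct (d2_rep (fe f) (fe f1) s e He) as [z1 [z2 [Hz1 [Hz2 E]]]].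
  intros; apply (A1 _ _ _ _ _ HA).
  pose proof (A10 _ _ _ _ _ HA z1 z2 ltac:(lra)). unfold D2. rewrite E.
  apply Rdiv_le_0_compat. nra. nra.
Qed.

Lemma A14c sigma f f1 f2 f3 s e : assumptions_A sigma f f1 f2 f3 -> 0 < e -> sigma < s ->
  exists z, s <= z <= s + 2*e /\ D2 (fe f) e s = f2 z.
Proof.
  intros HA He Hs. destruct (d2_mvt (fe f) (fe f1) f2 s e He) as [z [Hz E]].
  intros; apply (A1 _ _ _ _ _ HA). intros; apply (A8 _ _ _ _ _ HA); lra.
  exists z. split. auto. unfold D2. rewrite E. field. lra.
Qed.

Lemma A14d sigma f f1 f2 f3 (g2 : R -> R) s e : assumptions_A sigma f f1 f2 f3 -> 0 < e -> 0 < s ->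
  deriv_on (Ioi 0) f1 g2 ->
  exists z, s <= z <= s + 2*e /\ D2 (fe f) e s = g2 z.
Proof.
  intros HA He Hs Hg. destruct (d2_mvt (fe f) (fe f1) g2 s e He) as [z [Hz E]].
  intros; apply (A1 _ _ _ _ _ HA).
  intros y Hy. apply (dext_loc f1). exists y. split. lra. intros t Ht. apply Rabs_def2 in Ht.
  rewrite fe_pos by lra. auto.
  apply (deriv_on_open (Ioi 0)); auto. apply Ioi_open; lra. unfold Ioi; lra.
  exists z. split. auto. unfold D2. rewrite E. field. lra.
Qed.

Lemma A14e sigma f f1 f2 f3 (F : R -> R) s e : assumptions_A sigma f f1 f2 f3 ->
  (forall x, is_derive F x (fe f x)) -> 0 < e ->
  D2 F e s <= D2 F (2*e) s.
Proof.
  intros HA HF He.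
  set (d3 := fun x => F (x + 3*e) - 3 * F (x + 2*e) + 3 * F (x + e) - F x).
  assert (H3 : forall x, 0 <= d3 x).
  { intro x. set (Dd := fun y => F (y + e) - F y). set (dd := fun y => fe f (y + e) - fe f y).
    destruct (d2_rep Dd dd x e He) as [z1 [z2 [Hz1 [Hz2 E]]]].
    { intros y Hy. unfold Dd, dd. apply dminus. apply dshift, HF. apply HF. }
    assert (dd z1 <= dd z2).
    { apply (mvt_nondecr dd (fun y => fe f1 (y + e) - fe f1 y)). lra.
      intros y Hy. unfold dd. apply dminus. apply dshift, (A1 _ _ _ _ _ HA). apply (A1 _ _ _ _ _ HA).
      intros y Hy. pose proof (A10 _ _ _ _ _ HA y (y + e)). lra. }
    unfold d3. unfold Dd in E.
    replace (x + 2*e + e) with (x + 3*e) in E by ring.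
    replace (x + 2*e) with (x + e + e) in E by ring.
    replace (x + 2*e) with (x + e + e) by ring.
    replace (x + 3*e) with (x + e + e + e) in * by ring. nra. }
  pose proof (H3 s). pose proof (H3 (s + e)). unfold d3 in *.
  unfold D2.
  replace (s + 2 * (2 * e)) with (s + e + 3 * e) by ring.
  replace (s + e + 2 * e) with (s + 3 * e) in * by ring.
  replace (s + e + e) with (s + 2 * e) in * by ring.
  assert (0 < e^2) by nra.
  apply Rmult_le_reg_r with (4 * e^2). nra.
  replace ((F (s + 2 * e) - 2 * F (s + e) + F s) / e ^ 2 * (4 * e ^ 2)) with
    (4 * (F (s + 2 * e) - 2 * F (s + e) + F s)) by (field; lra).
  replace ((F (s + e + 3 * e) - 2 * F (s + 2 * e) + F s) / (2 * e) ^ 2 * (4 * e ^ 2)) with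
    (F (s + e + 3 * e) - 2 * F (s + 2 * e) + F s) by (field; lra).
  nra.
Qed.


Lemma CKb (K : R -> Prop) : compact K -> exists R, 0 <= R /\ forall x, K x -> x <= R.
Proof. intros HK. destruct (compact_P1 K HK) as [m [M H]]. exists (Rabs M). split. apply Rabs_pos.
  intros x Kx. pose proof (H x Kx). pose proof (Rle_abs M). lra. Qed.

Lemma CKlow (K : R -> Prop) c : compact K -> (forall x, K x -> x <> c) ->
  exists eta, 0 < eta /\ forall x, K x -> Rabs (x - c) >= eta.
Proof.
  intros HK Hc. pose proof (compact_P2 K HK) as Hcl. unfold closed_set in Hcl.
  destruct (Hcl c) as [del Hdel].
  { unfold complementary. intro Kc. apply (Hc c Kc). auto. }
  exists del. split. apply cond_pos. intros x Kx. apply Rnot_lt_ge. intro Hlt.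
  apply (Hdel x). unfold disc. exact Hlt. exact Kx.
Qed.

Lemma CK1 (K : R -> Prop) : compact K -> (forall x, K x -> Ici0 x) ->
  exists R, 0 <= R /\ forall x, K x -> 0 <= x <= R.
Proof. intros HK HD. destruct (CKb K HK) as [R [HR H]]. exists R. split; auto.
  intros x Kx. split. apply HD; auto. auto. Qed.

Lemma CK2 (K : R -> Prop) c : compact K -> (forall x, K x -> Ioi c x) ->
  exists eta R, 0 < eta /\ forall x, K x -> c + eta <= x <= R.
Proof. intros HK HD. destruct (CKb K HK) as [R [HR H]].
  destruct (CKlow K c HK) as [eta [He H2]]. intros x Kx. pose proof (HD x Kx). unfold Ioi in H0. lra.
  exists eta, R. split; auto. intros x Kx. split; auto.
  pose proof (H2 x Kx). pose proof (HD x Kx). unfold Ioi in H1. rewrite Rabs_right in H0 by lra. lra. Qed.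

Lemma CK3 (K : R -> Prop) c : compact K -> (forall x, K x -> 0 <= x < c) ->
  exists eta, 0 < eta /\ forall x, K x -> 0 <= x <= c - eta.
Proof. intros HK HD.
  destruct (CKlow K c HK) as [eta [He H2]]. intros x Kx. pose proof (HD x Kx). lra.
  exists eta. split; auto. intros x Kx.
  pose proof (H2 x Kx). pose proof (HD x Kx). rewrite Rabs_left in H by lra. lra. Qed.

Definition UC (P : R -> Prop) (u : nat -> R -> R) (v : R -> R) :=
  forall g, 0 < g -> exists N, forall n x, (N <= n)%nat -> P x -> Rabs (u n x - v x) <= g.

Lemma UC_on P u v : UC P u v -> unif_cv_on P u v.
Proof. intros H eps He. destruct (H (eps/2)) as [N HN]. lra. exists N. intros n x Hn Px.
  pose proof (HN n x Hn Px). lra. Qed.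

Lemma UC_sub (P Q : R -> Prop) u v : (forall x, Q x -> P x) -> UC P u v -> UC Q u v.
Proof. intros HQ H g Hg. destruct (H g Hg) as [N HN]. exists N. intros; apply HN; auto. Qed.

Lemma ucont (g : R -> R) a b : (forall x, a <= x <= b -> continuity_pt g x) ->
  forall eps, 0 < eps -> exists del, 0 < del /\ forall x y, a <= x <= b -> a <= y <= b ->
    Rabs (x - y) < del -> Rabs (g x - g y) < eps.
Proof. intros Hc eps He. destruct (Heine g (fun c => a <= c <= b) (compact_P3 a b) Hc (mkposreal _ He)) as [del H].
  exists del. split. apply cond_pos. intros; apply H; auto. Qed.

Lemma Nmax (P1 P2 : nat -> Prop) : (exists N, forall n, (N <= n)%nat -> P1 n) ->
  (exists N, forall n, (N <= n)%nat -> P2 n) -> exists N, forall n, (N <= n)%nat -> P1 n /\ P2 n.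
Proof. intros [N1 H1] [N2 H2]. exists (max N1 N2). intros n Hn. split. apply H1; lia. apply H2; lia. Qed.

Ltac dB HA := destruct HA as (HAs & HAconv & HAmon & HAd & HAc1 & HAd2 & HAd3 & HAc3 & HAf0 & HAsup & HAz & HApos).

Lemma prim_RInt (g : R -> R) : (forall x, continuity_pt g x) ->
  forall x, is_derive (fun b => RInt g 0 b) x (g x).
Proof.
  intros Hc x.
  apply (is_derive_RInt g (fun b => RInt g 0 b) 0 x).
  - apply filter_forall. intro b. apply (RInt_correct (V:=R_CompleteNormedModule)). apply (ex_RInt_continuous (V:=R_CompleteNormedModule)).
    intros z _. apply continuity_pt_filterlim. apply Hc.
  - apply continuity_pt_filterlim. apply Hc.
Qed.

Definition Fp (f : R -> R) x := RInt (fe f) 0 x.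
Definition F2p (f : R -> R) x := RInt (Fp f) 0 x.
Definition Pn (n : nat) x := RInt (p n) 0 x.
Definition Fn sigma f n s := D2 (F2p f) (en sigma n) s - D2 (F2p f) (en sigma n) 0 + (Pn n s - Pn n 0).
Definition Fn1 sigma f n s := D2 (Fp f) (en sigma n) s + p n s.
Definition Fn2 sigma f n s := D2 (fe f) (en sigma n) s + p1 n s.
Definition Fn3 sigma f1 n s := D2 (fe f1) (en sigma n) s + p2 n s.

Lemma cp2 n s : continuity_pt (p2 n) s.
Proof. apply continuity_pt_filterlim. apply (ex_derive_continuous (K:=R_AbsRing) (V:=R_NormedModule)).
  unfold p2, q, q1, q2. auto_derive. repeat split; nra. Qed.


Lemma dFp sigma f f1 f2 f3 : assumptions_A sigma f f1 f2 f3 -> forall (x : R), is_derive (Fp f) x (fe f x).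
Proof. intros HA x. apply prim_RInt. intro y. apply (cont_of_derive _ _ _ (A1 _ _ _ _ _ HA y)). Qed.
Lemma dF2p sigma f f1 f2 f3 : assumptions_A sigma f f1 f2 f3 -> forall (x : R), is_derive (F2p f) x (Fp f x).
Proof. intros HA x. apply prim_RInt. intro y. apply (cont_of_derive _ _ _ (dFp _ _ _ _ _ HA y)). Qed.
Lemma dPn n (x : R) : is_derive (Pn n) x (p n x).
Proof. apply prim_RInt. intro y. apply (cont_of_derive _ _ _ (dp n y)). Qed.

Lemma dFn sigma f f1 f2 f3 : assumptions_A sigma f f1 f2 f3 -> forall n (x : R), is_derive (Fn sigma f n) x (Fn1 sigma f n x).
Proof. intros HA n x. unfold Fn, Fn1.
  apply (deq _ _ (D2 (Fp f) (en sigma n) x - 0 + (p n x - 0))). 2: ring.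
  apply dplus. apply dminus. apply dD2. apply (dF2p _ _ _ _ _ HA). apply dconst.
  apply dminus. apply dPn. apply dconst. Qed.
Lemma dFn1 sigma f f1 f2 f3 : assumptions_A sigma f f1 f2 f3 -> forall n (x : R), is_derive (Fn1 sigma f n) x (Fn2 sigma f n x).
Proof. intros HA n x. unfold Fn1, Fn2. apply dplus. apply dD2. apply (dFp _ _ _ _ _ HA). apply dp. Qed.
Lemma dFn2 sigma f f1 f2 f3 : assumptions_A sigma f f1 f2 f3 -> forall n (x : R), is_derive (Fn2 sigma f n) x (Fn3 sigma f1 n x).
Proof. intros HA n x. unfold Fn3, Fn2. apply dplus. apply dD2. apply (A1 _ _ _ _ _ HA). apply dp1. Qed.
Lemma cFn3 sigma f f1 f2 f3 : assumptions_A sigma f f1 f2 f3 -> forall n x, continuity_pt (Fn3 sigma f1 n) x.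
Proof. intros HA n x. unfold Fn3. apply (cext (fun y => 1 * D2 (fe f1) (en sigma n) y + 1 * p2 n y)).
  intro; ring. apply clin. apply cD2. apply (A2 _ _ _ _ _ HA). apply cp2. Qed.
Lemma cFn1 sigma f f1 f2 f3 : assumptions_A sigma f f1 f2 f3 -> forall n x, continuity_pt (Fn1 sigma f n) x.
Proof. intros HA n x. apply (cont_of_derive _ _ _ (dFn1 _ _ _ _ _ HA n x)). Qed.

Lemma Fn0 sigma f n : Fn sigma f n 0 = 0.
Proof. unfold Fn. ring. Qed.

Lemma T1_rep sigma f f1 f2 f3 : assumptions_A sigma f f1 f2 f3 -> forall n s,
  exists z, s <= z <= s + 2 * en sigma n /\ D2 (Fp f) (en sigma n) s = fe f1 z.
Proof. intros HA n s. assert (0 < sigma) by (dB HA; auto).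
  apply (A14a _ _ _ _ _ _ s _ HA). apply (dFp _ _ _ _ _ HA). apply en_pos; auto. Qed.

Lemma T_low sigma f f1 f2 f3 : assumptions_A sigma f f1 f2 f3 -> forall n s,
  s <= sigma - 2 * en sigma n -> D2 (Fp f) (en sigma n) s = 0 /\ D2 (fe f) (en sigma n) s = 0.
Proof. intros HA n s Hs0. assert (0 < sigma) by (dB HA; auto). pose proof (en_pos sigma n H).
  split. destruct (T1_rep _ _ _ _ _ HA n s) as [z [Hz E]]. rewrite E. apply (A6 _ _ _ _ _ HA). lra.
  unfold D2. rewrite !(A7 _ _ _ _ _ HA) by lra. unfold Rdiv; ring. Qed.

Lemma Fn1_0 sigma f f1 f2 f3 : assumptions_A sigma f f1 f2 f3 -> forall n, Fn1 sigma f n 0 = 0.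
Proof. intros HA n. assert (0 < sigma) by (dB HA; auto). pose proof (en_le sigma n H).
  unfold Fn1. rewrite (proj1 (T_low _ _ _ _ _ HA n 0 ltac:(lra))). rewrite pp0. ring. Qed.

Lemma Fn1_ge sigma f f1 f2 f3 : assumptions_A sigma f f1 f2 f3 -> forall n s,
  fe f1 s <= Fn1 sigma f n s.
Proof. intros HA n s. unfold Fn1. destruct (T1_rep _ _ _ _ _ HA n s) as [z [Hz E]]. rewrite E.
  pose proof (A10 _ _ _ _ _ HA s z ltac:(lra)). pose proof (pp_nonneg n s). lra. Qed.

Lemma Fn1_le sigma f f1 f2 f3 : assumptions_A sigma f f1 f2 f3 -> forall n s,
  exists z, s <= z <= s + 2 * en sigma n /\ Fn1 sigma f n s = fe f1 z + p n s.
Proof. intros HA n s. destruct (T1_rep _ _ _ _ _ HA n s) as [z [Hz E]]. exists z. split; auto.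
  unfold Fn1. rewrite E. auto. Qed.

Lemma Fn2_nonneg sigma f f1 f2 f3 : assumptions_A sigma f f1 f2 f3 -> forall n s, 0 <= s -> 0 <= Fn2 sigma f n s.
Proof. intros HA n s Hs. assert (0 < sigma) by (dB HA; auto). unfold Fn2.
  pose proof (A14b _ _ _ _ _ s (en sigma n) HA (en_pos _ n H)). pose proof (pp1_nonneg n s Hs). lra. Qed.
Lemma Fn2_pos sigma f f1 f2 f3 : assumptions_A sigma f f1 f2 f3 -> forall n s, 0 < s -> 0 < Fn2 sigma f n s.
Proof. intros HA n s Hs. assert (0 < sigma) by (dB HA; auto). unfold Fn2.
  pose proof (A14b _ _ _ _ _ s (en sigma n) HA (en_pos _ n H)). pose proof (pp1_pos n s Hs). lra. Qed.

Lemma Fn1_mono sigma f f1 f2 f3 : assumptions_A sigma f f1 f2 f3 -> forall n s,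
  Fn1 sigma f (S n) s <= Fn1 sigma f n s.
Proof. intros HA n s. assert (0 < sigma) by (dB HA; auto). unfold Fn1.
  pose proof (pp_mono n s).
  assert (E : en sigma n = 2 * en sigma (S n)) by (rewrite en_S; field).
  rewrite E. pose proof (A14e _ _ _ _ _ (Fp f) s (en sigma (S n)) HA (dFp _ _ _ _ _ HA) (en_pos _ _ H)). lra. Qed.

Lemma Fn1_nondecr sigma f f1 f2 f3 : assumptions_A sigma f f1 f2 f3 -> forall n x y,
  0 <= x -> x <= y -> Fn1 sigma f n x <= Fn1 sigma f n y.
Proof. intros HA n x y Hx Hxy. apply (mvt_nondecr _ (Fn2 sigma f n)). auto.
  intros; apply (dFn1 _ _ _ _ _ HA). intros; apply (Fn2_nonneg _ _ _ _ _ HA); lra. Qed.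

Lemma Fn_ge sigma f f1 f2 f3 : assumptions_A sigma f f1 f2 f3 -> forall n s, 0 <= s -> f s <= Fn sigma f n s.
Proof. intros HA n s Hs. rewrite <- (fe_pos f s Hs).
  assert (E0 : fe f 0 = 0) by (dB HA; rewrite fe_pos by lra; auto).
  assert (Fn sigma f n 0 - fe f 0 <= Fn sigma f n s - fe f s).
  { apply (mvt_nondecr (fun x => Fn sigma f n x - fe f x) (fun x => Fn1 sigma f n x - fe f1 x) 0 s). auto.
    intros; apply dminus. apply (dFn _ _ _ _ _ HA). apply (A1 _ _ _ _ _ HA).
    intros; pose proof (Fn1_ge _ _ _ _ _ HA n x). lra. }
  rewrite Fn0, E0 in H. lra. Qed.


Lemma dn_le n : dn n * INR (n+2) <= dn n * (2 * INR (n+2) + 1) /\ dn n <= dn n * (2 * INR (n+2) + 1).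
Proof. pose proof (dn_pos n). pose proof (pos_INR (n+2)). split; nra. Qed.

Lemma U1 sigma f f1 f2 f3 : assumptions_A sigma f f1 f2 f3 -> forall R, 0 <= R ->
  UC (fun x => 0 <= x <= R) (Fn1 sigma f) (fe f1).
Proof.
  intros HA R HR g Hg. assert (Hs : 0 < sigma) by (dB HA; auto).
  destruct (ucont (fe f1) 0 (R + sigma) (fun x _ => A2 _ _ _ _ _ HA x) (g/2)) as [del [Hdel Hu]]. lra.
  destruct (small sigma Hs (Rmin (del/4) (g/2))) as [N HN]. apply Rmin_pos; lra.
  exists N. intros n x Hn Hx. destruct (HN n Hn) as [H1 [H2 H3]].
  pose proof (Rmin_l (del/4) (g/2)). pose proof (Rmin_r (del/4) (g/2)).
  pose proof (en_le sigma n Hs). pose proof (en_pos sigma n Hs).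
  destruct (Fn1_le _ _ _ _ _ HA n x) as [z [Hz E]]. rewrite E.
  assert (Rabs (fe f1 z - fe f1 x) < g/2). { apply Hu; try lra. rewrite Rabs_right; lra. }
  pose proof (pp_le n x). pose proof (pp_nonneg n x). pose proof (dn_le n).
  replace (fe f1 z + p n x - fe f1 x) with ((fe f1 z - fe f1 x) + p n x) by ring.
  eapply Rle_trans. apply Rabs_triang. rewrite (Rabs_right (p n x)) by lra. lra.
Qed.

Lemma U0 sigma f f1 f2 f3 : assumptions_A sigma f f1 f2 f3 -> forall R, 0 <= R ->
  UC (fun x => 0 <= x <= R) (Fn sigma f) f.
Proof.
  intros HA R HR g Hg.
  destruct (U1 _ _ _ _ _ HA R HR (g / (R + 1))) as [N HN]. apply Rdiv_lt_0_compat; lra.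
  exists N. intros n x Hn Hx.
  assert (E0 : fe f 0 = 0) by (dB HA; rewrite fe_pos by lra; auto).
  destruct (mvtD (fun y => Fn sigma f n y - fe f y) (fun y => Fn1 sigma f n y - fe f1 y) 0 x) as [c [Hc E]]. lra.
  intros; apply dminus. apply (dFn _ _ _ _ _ HA). apply (A1 _ _ _ _ _ HA).
  rewrite Fn0, E0 in E. rewrite <- (fe_pos f x) by lra.
  replace (Fn sigma f n x - fe f x) with ((Fn1 sigma f n c - fe f1 c) * (x - 0)) by lra.
  rewrite Rabs_mult. pose proof (HN n c Hn ltac:(lra)).
  rewrite (Rabs_right (x - 0)) by lra.
  assert (g / (R + 1) * x <= g). { apply Rmult_le_reg_r with (R+1). lra.
    replace (g / (R + 1) * x * (R + 1)) with (g * x) by (field; lra). nra. }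
  pose proof (Rabs_pos (Fn1 sigma f n c - fe f1 c)). nra.
Qed.

Lemma U2 sigma f f1 f2 f3 : assumptions_A sigma f f1 f2 f3 -> forall eta R, 0 < eta ->
  UC (fun x => sigma + eta <= x <= R) (Fn2 sigma f) f2.
Proof.
  intros HA eta R Heta g Hg. assert (Hs : 0 < sigma) by (dB HA; auto).
  destruct (ucont f2 (sigma + eta) (R + sigma) (fun x Hx => A5 _ _ _ _ _ HA x ltac:(lra)) (g/2)) as [del [Hdel Hu]]. lra.
  destruct (small sigma Hs (Rmin (del/4) (g/2))) as [N HN]. apply Rmin_pos; lra.
  exists N. intros n x Hn Hx. destruct (HN n Hn) as [H1 [H2 H3]].
  pose proof (Rmin_l (del/4) (g/2)). pose proof (Rmin_r (del/4) (g/2)).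
  pose proof (en_le sigma n Hs). pose proof (en_pos sigma n Hs).
  destruct (A14c _ _ _ _ _ x (en sigma n) HA ltac:(lra) ltac:(lra)) as [z [Hz E]].
  unfold Fn2. rewrite E.
  assert (Rabs (f2 z - f2 x) < g/2). { apply Hu; try lra. rewrite Rabs_right; lra. }
  pose proof (pp1_le n x ltac:(lra)). pose proof (pp1_nonneg n x ltac:(lra)). pose proof (dn_le n).
  replace (f2 z + p1 n x - f2 x) with ((f2 z - f2 x) + p1 n x) by ring.
  eapply Rle_trans. apply Rabs_triang. rewrite (Rabs_right (p1 n x)) by lra. lra.
Qed.

Lemma U3 sigma f f1 f2 f3 (g2 : R -> R) : assumptions_A sigma f f1 f2 f3 ->
  deriv_on (Ioi 0) f1 g2 -> cont_on (Ioi 0) g2 -> forall eta R, 0 < eta ->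
  UC (fun x => eta <= x <= R) (Fn2 sigma f) g2.
Proof.
  intros HA Hg2 Hcg eta R Heta g Hg. assert (Hs : 0 < sigma) by (dB HA; auto).
  destruct (ucont g2 eta (R + sigma) (fun x Hx => cont_open (Ioi 0) g2 x (Ioi_open 0 x ltac:(lra)) Hcg ltac:(unfold Ioi; lra)) (g/2)) as [del [Hdel Hu]]. lra.
  destruct (small sigma Hs (Rmin (del/4) (g/2))) as [N HN]. apply Rmin_pos; lra.
  exists N. intros n x Hn Hx. destruct (HN n Hn) as [H1 [H2 H3]].
  pose proof (Rmin_l (del/4) (g/2)). pose proof (Rmin_r (del/4) (g/2)).
  pose proof (en_le sigma n Hs). pose proof (en_pos sigma n Hs).
  destruct (A14d _ _ _ _ _ g2 x (en sigma n) HA ltac:(lra) ltac:(lra) Hg2) as [z [Hz E]].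
  unfold Fn2. rewrite E.
  assert (Rabs (g2 z - g2 x) < g/2). { apply Hu; try lra. rewrite Rabs_right; lra. }
  pose proof (pp1_le n x ltac:(lra)). pose proof (pp1_nonneg n x ltac:(lra)). pose proof (dn_le n).
  replace (g2 z + p1 n x - g2 x) with ((g2 z - g2 x) + p1 n x) by ring.
  eapply Rle_trans. apply Rabs_triang. rewrite (Rabs_right (p1 n x)) by lra. lra.
Qed.


Lemma Rabs_le2 a d : Rabs a <= d -> - d <= a <= d.
Proof. unfold Rabs; destruct Rcase_abs; lra. Qed.

Lemma Rabs_le2' a b h : 0 <= a <= h -> 0 <= b <= h -> Rabs (a - b) <= h.
Proof. unfold Rabs; destruct Rcase_abs; lra. Qed.

Lemma div_ge1 a b : 0 < b -> b <= a -> 1 <= a / b.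
Proof. intros. apply Rmult_le_reg_r with b; auto. unfold Rdiv. rewrite Rmult_assoc, Rinv_l by lra. lra. Qed.

Lemma ratio_lemma x sg m0 M u u0 v y d : 0 < sg -> sg <= x -> 0 < m0 -> m0 <= y ->
  Rabs (u - u0) <= d -> Rabs (v - y) <= d -> d <= m0 / 2 -> 0 <= u0 <= M ->
  Rabs (u / (x * v) - u0 / (x * y)) <= d * (2 / (sg * m0) + 2 * M / (sg * m0^2)).
Proof.
  intros Hsg Hx Hm Hy Hu Hv Hd Hu0.
  assert (Hv2 : m0 / 2 <= v) by (apply Rabs_le2 in Hv; lra).
  assert (Hd0 : 0 <= d) by (pose proof (Rabs_pos (u - u0)); lra).
  assert (0 < v) by lra. assert (0 < y) by lra. assert (0 < x) by lra.
  replace (u / (x * v) - u0 / (x * y)) with (((u - u0) * y + u0 * (y - v)) / (x * v * y)) by (field; lra).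
  unfold Rdiv at 1. rewrite Rabs_mult. rewrite (Rabs_right (/ (x * v * y))) by (apply Rle_ge, Rlt_le, Rinv_0_lt_compat; apply Rmult_lt_0_compat; nra).
  assert (HN : Rabs ((u - u0) * y + u0 * (y - v)) <= d * y + M * d).
  { eapply Rle_trans. apply Rabs_triang. rewrite !Rabs_mult. rewrite (Rabs_right y) by lra.
    rewrite (Rabs_right u0) by lra. rewrite Rabs_minus_sym in Hv.
    pose proof (Rabs_pos (y - v)). pose proof (Rabs_pos (u - u0)). nra. }
  assert (HZ : 0 < x * v * y) by (apply Rmult_lt_0_compat; nra).
  apply Rmult_le_reg_r with (x * v * y). auto.
  rewrite Rmult_assoc, Rinv_l, Rmult_1_r by lra.
  eapply Rle_trans. apply HN.
  assert (E1 : d * y <= d * (2 / (sg * m0)) * (x * v * y)).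
  { assert (sg * (m0/2) <= x * v) by (apply Rmult_le_compat; lra).
    replace (d * (2 / (sg * m0)) * (x * v * y)) with (d * y * ((x * v) / (sg * (m0/2)))) by (field; lra).
    assert (1 <= (x * v) / (sg * (m0/2))).
    { apply div_ge1; auto. apply Rmult_lt_0_compat; lra. }
    assert (0 <= d * y) by nra. nra. }
  assert (E2 : M * d <= d * (2 * M / (sg * m0^2)) * (x * v * y)).
  { assert (sg * (m0/2) * m0 <= x * v * y) by (apply Rmult_le_compat; try nra; apply Rmult_le_compat; lra).
    replace (d * (2 * M / (sg * m0^2)) * (x * v * y)) with (M * d * ((x * v * y) / (sg * (m0/2) * m0))) by (field; lra).
    assert (1 <= (x * v * y) / (sg * (m0/2) * m0)).
    { apply div_ge1; auto. apply Rmult_lt_0_compat; [apply Rmult_lt_0_compat|]; lra. }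
    assert (0 <= M * d) by nra. nra. }
  replace (d * (2 / (sg * m0) + 2 * M / (sg * m0 ^ 2)) * (x * v * y)) with
    (d * (2 / (sg * m0)) * (x * v * y) + d * (2 * M / (sg * m0 ^ 2)) * (x * v * y)) by ring.
  lra.
Qed.

Lemma ratio_lemma2 x R m0 v y d : 0 <= x <= R -> 0 < m0 -> m0 <= y ->
  Rabs (v - y) <= d -> d <= m0 / 2 ->
  Rabs (x^2 / v - x^2 / y) <= d * (2 * R^2 / m0^2).
Proof.
  intros Hx Hm Hy Hv Hd.
  assert (Hv2 : m0 / 2 <= v) by (apply Rabs_le2 in Hv; lra).
  assert (Hd0 : 0 <= d) by (pose proof (Rabs_pos (v - y)); lra).
  assert (0 < v) by lra. assert (0 < y) by lra.
  replace (x^2 / v - x^2 / y) with (x^2 * (y - v) / (v * y)) by (field; lra).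
  unfold Rdiv. rewrite Rabs_mult, Rabs_mult. rewrite (Rabs_right (x^2)) by nra.
  rewrite (Rabs_right (/ (v * y))) by (apply Rle_ge, Rlt_le, Rinv_0_lt_compat; nra).
  rewrite Rabs_minus_sym in Hv.
  assert (HZ : 0 < v * y) by nra.
  apply Rmult_le_reg_r with (v * y). auto.
  rewrite Rmult_assoc, Rinv_l, Rmult_1_r by lra.
  assert (x^2 <= R^2) by nra.
  assert ((m0/2) * m0 <= v * y) by (apply Rmult_le_compat; lra).
  replace (d * (2 * R ^ 2 * / m0 ^ 2) * (v * y)) with (d * R^2 * ((v * y) / ((m0/2) * m0))) by (field; lra).
  assert (1 <= (v * y) / ((m0/2) * m0)).
  { apply div_ge1; auto. apply Rmult_lt_0_compat; lra. }
  pose proof (Rabs_pos (y - v)).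
  assert (x^2 * Rabs (y - v) <= R^2 * d) by (apply Rmult_le_compat; nra).
  assert (0 <= d * R^2) by nra. nra.
Qed.


Lemma AN sigma f f1 f2 f3 tsig : assumptions_A sigma f f1 f2 f3 -> sigma < tsig ->
  nondecr_on (fun s => sigma <= s <= tsig) (a_fun sigma f1 f2) ->
  forall eta0 R, 0 < eta0 ->
  UC (fun x => eta0 <= x <= R) (fun n => an_fun (Fn1 sigma f n) (Fn2 sigma f n)) (a_fun sigma f1 f2).
Proof.
  intros HA Ht Hnd eta0 R Heta0 g Hg.
  assert (Hs : 0 < sigma) by (dB HA; auto).
  set (a := a_fun sigma f1 f2) in *.
  set (eps1 := Rmin (g/2) (g * eta0 / (4 * tsig))).
  assert (He1 : 0 < eps1) by (apply Rmin_pos; [lra| apply Rdiv_lt_0_compat; nra]).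
  destruct (A12 _ _ _ _ _ tsig HA Ht Hnd eps1 He1) as [eta1 [Heta1 [Heta1t Ha1]]].
  fold a in Ha1. set (eta := eta1 / 2).
  set (R' := Rmax R (sigma + eta)).
  assert (HR'1 : R <= R') by apply Rmax_l. assert (HR'2 : sigma + eta <= R') by apply Rmax_r.
  destruct (continuity_ab_min f2 (sigma + eta) R' HR'2) as [mx [Hmx1 Hmx2]].
  { intros c Hc. apply (A5 _ _ _ _ _ HA). unfold eta in *; lra. }
  set (m0 := f2 mx).
  assert (Hm0 : 0 < m0) by (unfold m0; dB HA; apply HApos; unfold eta in *; lra).
  set (M := fe f1 R').
  assert (HM : 0 <= M) by apply (A11 _ _ _ _ _ HA).
  set (C := 2 / (sigma * m0) + 2 * M / (sigma * m0^2)).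
  assert (HC : 0 <= C).
  { unfold C. assert (0 < sigma * m0) by nra. assert (0 < sigma * m0^2) by (apply Rmult_lt_0_compat; nra).
    apply Rplus_le_le_0_compat; apply Rdiv_le_0_compat; nra. }
  set (d := Rmin (m0/2) (g / (C + 1))).
  assert (Hd : 0 < d) by (apply Rmin_pos; [lra|apply Rdiv_lt_0_compat; lra]).
  assert (HR0 : 0 <= R') by (unfold eta in *; lra).
  destruct (U1 _ _ _ _ _ HA R' HR0 d Hd) as [N1 HN1].
  destruct (U2 _ _ _ _ _ HA eta R' ltac:(unfold eta; lra) d Hd) as [N2 HN2].
  destruct (small sigma Hs (Rmin (eta/4) (g / (4 * (1 + R^2))))) as [N3 HN3].
  { apply Rmin_pos. unfold eta; lra. apply Rdiv_lt_0_compat. lra. nra. }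
  exists (max N1 (max N2 N3)). intros n x Hn Hx.
  assert (Hn1 : (N1 <= n)%nat) by lia. assert (Hn2 : (N2 <= n)%nat) by lia. assert (Hn3 : (N3 <= n)%nat) by lia.
  destruct (HN3 n Hn3) as [Hen [_ Hm]].
  pose proof (Rmin_l (eta/4) (g / (4 * (1 + R^2)))). pose proof (Rmin_r (eta/4) (g / (4 * (1 + R^2)))).
  set (e := en sigma n) in *. pose proof (en_pos sigma n Hs) as Hepos. fold e in Hepos.
  assert (Hx0 : 0 < x) by lra.
  pose proof (Fn2_pos _ _ _ _ _ HA n x Hx0) as HF2.
  unfold an_fun.
  destruct (Rle_dec x (sigma + eta)) as [Hreg|Hreg].
  -
    assert (Hxe : x + 2 * e <= tsig) by (unfold eta in *; lra).
    pose proof (A13 _ _ _ _ _ tsig (Fp f) x e HA Ht Hnd (dFp _ _ _ _ _ HA) Hepos Hxe) as HT.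
    set (c := (x + 2*e) * a (x + 2*e)) in *.
    assert (Hax : a (x + 2*e) <= a (sigma + eta1)).
    { destruct (Rle_dec (x + 2*e) sigma). unfold a; rewrite a_zero by lra. apply (a_nonneg _ _ _ _ _ HA).
      apply Hnd; [split|split|]; unfold eta in *; lra. }
    assert (Ha0 : 0 <= a (x + 2*e)) by apply (a_nonneg _ _ _ _ _ HA).
    assert (Hc0 : 0 <= c) by (unfold c; apply Rmult_le_pos; lra).
    set (m := INR (n+2)).
    assert (Hmpos : 0 < m) by (unfold m; apply lt_0_INR; lia).
    set (k := x * (1 + x^2) / (2 * m)).
    assert (Hk0 : 0 <= k) by (unfold k; apply Rdiv_le_0_compat; nra).
    assert (Hpk : p n x = k * p1 n x).
    { unfold k. pose proof (pp_ratio n x) as Hr. fold m in Hr. apply Rmult_eq_reg_r with (2 * m); [|lra].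
      rewrite Hr. field. lra. }
    pose proof (A14b _ _ _ _ _ x e HA Hepos) as HT2.
    pose proof (pp1_nonneg n x ltac:(lra)) as Hp1.
    assert (HF1 : Fn1 sigma f n x <= (c + k) * Fn2 sigma f n x).
    { unfold Fn1, Fn2. fold e. rewrite Hpk.
      assert (0 <= c * p1 n x) by (apply Rmult_le_pos; lra).
      assert (0 <= k * D2 (fe f) e x) by (apply Rmult_le_pos; lra). fold a in HT. fold c in HT. nra. }
    assert (HF1' : 0 <= Fn1 sigma f n x) by (pose proof (Fn1_ge _ _ _ _ _ HA n x); pose proof (A11 _ _ _ _ _ HA x); lra).
    assert (Han : Fn1 sigma f n x / (x * Fn2 sigma f n x) <= c / x + k / x).
    { replace (c / x + k / x) with ((c + k) * Fn2 sigma f n x / (x * Fn2 sigma f n x)) by (field; lra).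
      unfold Rdiv. apply Rmult_le_compat_r. apply Rlt_le, Rinv_0_lt_compat; nra. auto. }
    assert (Han0 : 0 <= Fn1 sigma f n x / (x * Fn2 sigma f n x)) by (apply Rdiv_le_0_compat; nra).
    assert (Hcx : c / x <= g / 4).
    { unfold c. assert ((x + 2*e) / x <= tsig / eta0).
      { apply Rmult_le_reg_r with x. lra. unfold Rdiv at 1. rewrite Rmult_assoc, Rinv_l, Rmult_1_r by lra.
        apply Rle_trans with tsig. lra. replace (tsig / eta0 * x) with (tsig * (x / eta0)) by (field; lra).
        assert (1 <= x / eta0) by (apply div_ge1; lra). nra. }
      assert (eps1 <= g * eta0 / (4 * tsig)) by apply Rmin_r.
      replace ((x + 2 * e) * a (x + 2 * e) / x) with ((x + 2*e)/x * a (x + 2*e)) by (field; lra).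
      apply Rle_trans with (tsig / eta0 * a (sigma + eta1)).
      apply Rmult_le_compat; try lra. apply Rdiv_le_0_compat; lra.
      apply Rle_trans with (tsig / eta0 * (g * eta0 / (4 * tsig))).
      apply Rmult_le_compat_l. apply Rdiv_le_0_compat; lra. lra.
      right. field. lra. }
    assert (Hkx : k / x <= g / 4).
    { unfold k. replace (x * (1 + x ^ 2) / (2 * m) / x) with ((1 + x^2) * / m / 2) by (field; lra).
      assert (/ m <= g / (4 * (1 + R^2))) by (unfold m; lra).
      assert (x^2 <= R^2) by nra.
      assert (HH : (1 + x^2) * / m <= (1 + R^2) * (g / (4 * (1 + R^2)))).
      { apply Rmult_le_compat; try nra. apply Rlt_le, Rinv_0_lt_compat; lra. }
      replace ((1 + R ^ 2) * (g / (4 * (1 + R ^ 2)))) with (g/4) in HH by (field; nra). lra. }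
    assert (Hax2 : 0 <= a x <= g/2).
    { split. apply (a_nonneg _ _ _ _ _ HA). destruct (Rle_dec x sigma). unfold a; rewrite a_zero by lra; lra.
      assert (a x <= a (sigma + eta1)) by (apply Hnd; [split|split|]; unfold eta in *; lra).
      pose proof (Rmin_l (g/2) (g * eta0 / (4 * tsig))) as HH. fold eps1 in HH. lra. }
    apply Rle_trans with (g/2). apply Rabs_le2'; lra. lra.
  -
    assert (Hx2 : sigma < x) by (unfold eta in *; lra).
    unfold a, a_fun. destruct (Rlt_dec sigma x) as [_|Hf]; [|lra].
    rewrite <- (fe_pos f1 x) by lra.
    eapply Rle_trans. apply (ratio_lemma x sigma m0 M (Fn1 sigma f n x) (fe f1 x) (Fn2 sigma f n x) (f2 x) d); try lra.
    + apply Hmx1. lra.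
    + apply HN1; auto. lra.
    + apply HN2; auto. lra.
    + apply Rmin_l.
    + split. apply (A11 _ _ _ _ _ HA). apply (A10 _ _ _ _ _ HA). lra.
    + fold C. assert (d <= g / (C + 1)) by apply Rmin_r.
      apply Rle_trans with (g / (C + 1) * C). apply Rmult_le_compat_r; lra.
      apply Rmult_le_reg_r with (C + 1). lra. replace (g / (C + 1) * C * (C + 1)) with (g * C) by (field; lra). nra.
Qed.


Lemma BN sigma f f1 f2 f3 : assumptions_A sigma f f1 f2 f3 ->
  forall eta0 R, 0 < eta0 ->
  UC (fun x => sigma + eta0 <= x <= R) (fun n => bn_fun (Fn2 sigma f n)) (b_fun sigma f2).
Proof.
  intros HA eta0 R Heta0 g Hg.
  assert (Hs : 0 < sigma) by (dB HA; auto).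
  set (R' := Rmax R (sigma + eta0)).
  assert (HR'1 : R <= R') by apply Rmax_l. assert (HR'2 : sigma + eta0 <= R') by apply Rmax_r.
  destruct (continuity_ab_min f2 (sigma + eta0) R' HR'2) as [mx [Hmx1 Hmx2]].
  { intros c Hc. apply (A5 _ _ _ _ _ HA). lra. }
  set (m0 := f2 mx).
  assert (Hm0 : 0 < m0) by (unfold m0; dB HA; apply HApos; lra).
  set (C := 2 * R'^2 / m0^2).
  assert (HC : 0 <= C) by (unfold C; apply Rdiv_le_0_compat; nra).
  set (d := Rmin (m0/2) (g / (C + 1))).
  assert (Hd : 0 < d) by (apply Rmin_pos; [lra|apply Rdiv_lt_0_compat; lra]).
  destruct (U2 _ _ _ _ _ HA eta0 R' Heta0 d Hd) as [N HN].
  exists N. intros n x Hn Hx.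
  unfold bn_fun, b_fun. destruct (Rlt_dec sigma x) as [_|Hf]; [|lra].
  eapply Rle_trans. apply (ratio_lemma2 x R' m0 (Fn2 sigma f n x) (f2 x) d); try lra.
  + apply Hmx1. lra.
  + apply HN; auto. lra.
  + apply Rmin_l.
  + fold C. assert (d <= g / (C + 1)) by apply Rmin_r.
    apply Rle_trans with (g / (C + 1) * C). apply Rmult_le_compat_r; lra.
    apply Rmult_le_reg_r with (C + 1). lra. replace (g / (C + 1) * C * (C + 1)) with (g * C) by (field; lra). nra.
Qed.

Lemma low_expr sigma f f1 f2 f3 : assumptions_A sigma f f1 f2 f3 -> forall n s,
  0 < s -> s <= sigma - 2 * en sigma n ->
  Rabs ((s * Fn2 sigma f n s - Fn1 sigma f n s) / s ^ 3) <= dn n * (2 * INR (n+2) + 1) * s /\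
  Rabs (Fn1 sigma f n s / s) <= dn n * s.
Proof.
  intros HA n s Hs Hle. destruct (T_low _ _ _ _ _ HA n s Hle) as [E1 E2].
  unfold Fn1, Fn2. rewrite E1, E2. rewrite !Rplus_0_l.
  pose proof (dn_pos n). pose proof (pos_INR (n+2)).
  split.
  - unfold Rdiv. rewrite Rabs_mult. rewrite (Rabs_right (/ s^3)) by (apply Rle_ge, Rlt_le, Rinv_0_lt_compat, pow_lt; lra).
    pose proof (pp_v n s ltac:(lra)).
    assert (0 < s^3) by (apply pow_lt; lra).
    apply Rmult_le_reg_r with (s^3). auto. rewrite Rmult_assoc, Rinv_l, Rmult_1_r by lra.
    replace (dn n * (2 * INR (n + 2) + 1) * s * s ^ 3) with (dn n * (2 * INR (n + 2) + 1) * s ^ 4) by ring. auto.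
  - unfold Rdiv. rewrite Rabs_mult. rewrite (Rabs_right (/ s)) by (apply Rle_ge, Rlt_le, Rinv_0_lt_compat; lra).
    rewrite Rabs_right by (apply Rle_ge, pp_nonneg).
    apply Rmult_le_reg_r with s. auto. rewrite Rmult_assoc, Rinv_l, Rmult_1_r by lra.
    pose proof (pp_s n s). nra.
Qed.

Lemma PV sigma f f1 f2 f3 : assumptions_A sigma f f1 f2 f3 -> forall n,
  limit1_in (fun s => (s * Fn2 sigma f n s - Fn1 sigma f n s) / s ^ 3) (Ioi 0) 0 0 /\
  limit1_in (fun s => Fn1 sigma f n s / s) (Ioi 0) 0 0.
Proof.
  intros HA n. assert (Hs : 0 < sigma) by (dB HA; auto).
  pose proof (en_le sigma n Hs). pose proof (dn_pos n). pose proof (pos_INR (n+2)).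
  set (K := dn n * (2 * INR (n+2) + 1)).
  assert (HK : dn n <= K) by (unfold K; nra).
  split; intros eps Heps; exists (Rmin (sigma/2) (eps / (K + 1))); split;
    (try (apply Rmin_pos; [lra|apply Rdiv_lt_0_compat; nra]));
    intros s [Hs0 Hsd]; unfold Ioi in Hs0; change (dist R_met ?a ?b) with (R_dist a b) in Hsd |- *; unfold R_dist in Hsd |- *;
    rewrite Rminus_0_r in Hsd |- *; rewrite Rabs_right in Hsd by lra;
    pose proof (Rmin_l (sigma/2) (eps / (K + 1))); pose proof (Rmin_r (sigma/2) (eps / (K + 1)));
    destruct (low_expr _ _ _ _ _ HA n s Hs0 ltac:(lra)) as [B1 B2];
    assert (Hsk : K * s < eps) by
      (apply Rle_lt_trans with (K * (eps / (K + 1))); [apply Rmult_le_compat_l; nra|];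
       apply Rmult_lt_reg_r with (K + 1); [nra|]; replace (K * (eps / (K + 1)) * (K + 1)) with (K * eps) by (field; nra); nra).
  - fold K in B1. lra.
  - assert (dn n * s <= K * s) by nra. lra.
Qed.

Lemma PVI sigma f f1 f2 f3 : assumptions_A sigma f f1 f2 f3 -> forall eta, 0 < eta ->
  UC (fun x => 0 <= x <= sigma - eta) (fun n s => (s * Fn2 sigma f n s - Fn1 sigma f n s) / s ^ 3) (fun _ => 0) /\
  UC (fun x => 0 <= x <= sigma - eta) (fun n s => Fn1 sigma f n s / s) (fun _ => 0).
Proof.
  intros HA eta Heta. assert (Hs : 0 < sigma) by (dB HA; auto).
  split; intros g Hg; destruct (small sigma Hs (Rmin (eta/2) (g / (sigma + 1)))) as [N HN];
    (try (apply Rmin_pos; [lra|apply Rdiv_lt_0_compat; lra]));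
    exists N; intros n x Hn Hx; destruct (HN n Hn) as [H1 [H2 _]];
    pose proof (Rmin_l (eta/2) (g / (sigma + 1))); pose proof (Rmin_r (eta/2) (g / (sigma + 1)));
    pose proof (dn_pos n); pose proof (pos_INR (n+2));
    (destruct (Req_dec x 0) as [->|Hx0];
     [rewrite (Fn1_0 _ _ _ _ _ HA n); match goal with |- Rabs ?e <= _ => replace e with 0 by (unfold Rdiv; ring) end;
      rewrite Rabs_R0; lra|]);
    destruct (low_expr _ _ _ _ _ HA n x ltac:(lra) ltac:(lra)) as [B1 B2];
    assert (HB : dn n * (2 * INR (n + 2) + 1) * x <= g) by
      (apply Rle_trans with (g / (sigma + 1) * sigma); [apply Rmult_le_compat; [apply Rmult_le_pos; lra|lra|lra|lra]|];
       apply Rmult_le_reg_r with (sigma + 1); [lra|]; replace (g / (sigma + 1) * sigma * (sigma + 1)) with (g * sigma) by (field; lra); nra);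
    rewrite Rminus_0_r.
  - lra.
  - assert (0 <= dn n * x * INR (n+2)) by (apply Rmult_le_pos; [apply Rmult_le_pos|]; lra).
    assert (dn n * x <= dn n * (2 * INR (n + 2) + 1) * x) by lra. lra.
Qed.


Lemma convex_of (G g : R -> R) : (forall x, is_derive G x (g x)) ->
  (forall x y, 0 <= x -> x <= y -> g x <= g y) -> convex_on Ici0 G.
Proof.
  intros Hd Hm.
  assert (Key : forall x y t, 0 <= x -> x <= y -> 0 <= t <= 1 ->
    G (t * x + (1 - t) * y) <= t * G x + (1 - t) * G y).
  { intros x y t Hx Hxy Ht. set (z := t * x + (1 - t) * y).
    assert (Hz1 : x <= z) by (unfold z; nra). assert (Hz2 : z <= y) by (unfold z; nra).
    destruct (mvtD G g x z Hz1 (fun u _ => Hd u)) as [c1 [Hc1 E1]].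
    destruct (mvtD G g z y Hz2 (fun u _ => Hd u)) as [c2 [Hc2 E2]].
    assert (g c1 <= g c2) by (apply Hm; lra).
    assert (z - x = (1 - t) * (y - x)) by (unfold z; ring).
    assert (y - z = t * (y - x)) by (unfold z; ring).
    assert (0 <= t * (1 - t) * (y - x)) by (apply Rmult_le_pos; nra).
    assert (t * G x + (1 - t) * G y - G z = t * (1 - t) * (y - x) * (g c2 - g c1)).
    { replace (t * G x + (1 - t) * G y - G z) with (- t * (G z - G x) + (1 - t) * (G y - G z)) by ring.
      rewrite E1, E2. rewrite H0, H1. ring. }
    nra. }
  intros x y t Hx Hy Ht. unfold Ici0 in *. destruct (Rle_dec x y).
  apply Key; auto.
  replace (t * x + (1 - t) * y) with ((1 - t) * y + (1 - (1 - t)) * x) by ring.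
  replace (t * G x + (1 - t) * G y) with ((1 - t) * G y + (1 - (1 - t)) * G x) by ring.
  apply Key; lra.
Qed.

Lemma UC_ext P u v w : (forall x, P x -> v x = w x) -> UC P u v -> UC P u w.
Proof. intros E H g Hg. destruct (H g Hg) as [N HN]. exists N. intros n x Hn Px.
  rewrite <- E; auto. Qed.

Theorem theorem3p4 (sigma : R) (f f1 f2 f3 : R -> R) :
  assumptions_A sigma f f1 f2 f3 ->
  (exists tsigma, sigma < tsigma /\
     nondecr_on (fun s => sigma <= s <= tsigma) (a_fun sigma f1 f2)) ->
  exists fn fn1 fn2 fn3 : nat -> R -> R,
    (* convexity, f_n(0) = 0, superlinearity *)
    (forall n, convex_on Ici0 (fn n) /\ fn n 0 = 0 /\ superlinear (fn n)) /\
    (* (i) f_n in C^1([0,+oo)) and C^3((0,+oo)) *)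
    (forall n, deriv_on Ici0 (fn n) (fn1 n) /\ cont_on Ici0 (fn1 n) /\
               deriv_on (Ioi 0) (fn1 n) (fn2 n) /\ deriv_on (Ioi 0) (fn2 n) (fn3 n) /\
               cont_on (Ioi 0) (fn3 n)) /\
    (* (ii) *)
    unif_cv_compacts Ici0 fn f /\
    (* (iii) *)
    (forall n, fn1 n 0 = 0) /\
    (forall n s, 0 <= s -> fn1 (S n) s <= fn1 n s) /\
    unif_cv_compacts Ici0 fn1 f1 /\
    (* (iv) *)
    (forall n s, 0 < s -> 0 < fn2 n s) /\
    (* (v) *)
    (forall n,
       limit1_in (fun s => (s * fn2 n s - fn1 n s) / s ^ 3) (Ioi 0) 0 0 /\
       limit1_in (fun s => fn1 n s / s) (Ioi 0) 0 0) /\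
    (* (vi) *)
    unif_cv_compacts (fun s => 0 <= s < sigma)
      (fun n s => (s * fn2 n s - fn1 n s) / s ^ 3) (fun _ => 0) /\
    unif_cv_compacts (fun s => 0 <= s < sigma)
      (fun n s => fn1 n s / s) (fun _ => 0) /\
    (* (vii) *)
    unif_cv_compacts (Ioi 0) (fun n => an_fun (fn1 n) (fn2 n)) (a_fun sigma f1 f2) /\
    unif_cv_compacts (Ioi sigma) (fun n => bn_fun (fn2 n)) (b_fun sigma f2) /\
    (* (viii) *)
    (forall g2 : R -> R,
       deriv_on (Ioi 0) f1 g2 -> cont_on (Ioi 0) g2 ->
       unif_cv_compacts (Ioi 0) fn2 g2).
Proof.
  intros HA [tsig [Ht Hnd]].
  assert (Hs : 0 < sigma) by (dB HA; auto).
  exists (Fn sigma f), (Fn1 sigma f), (Fn2 sigma f), (Fn3 sigma f1).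
  split; [|split; [|split; [|split; [|split; [|split; [|split; [|split; [|split; [|split; [|split; [|split]]]]]]]]]]].
  - intro n. split; [|split].
    + apply (convex_of _ (Fn1 sigma f n)). apply (dFn _ _ _ _ _ HA).
      intros; apply (Fn1_nondecr _ _ _ _ _ HA); auto.
    + apply Fn0.
    + intro M. pose proof HA as HA2. destruct HA2 as (_ & _ & _ & _ & _ & _ & _ & _ & _ & Hsup & _). destruct (Hsup M) as [T HT].
      exists (Rmax T 1). intros s Hs1. pose proof (Rmax_l T 1). pose proof (Rmax_r T 1).
      pose proof (HT s ltac:(lra)). pose proof (Fn_ge _ _ _ _ _ HA n s ltac:(lra)).
      apply Rlt_le_trans with (f s / s). auto. unfold Rdiv. apply Rmult_le_compat_r.
      apply Rlt_le, Rinv_0_lt_compat; lra. auto.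
  - intro n. split; [|split; [|split; [|split]]].
    + apply deriv_on_of. intros; apply (dFn _ _ _ _ _ HA).
    + apply cont_on_of. intros; apply (cFn1 _ _ _ _ _ HA).
    + apply deriv_on_of. intros; apply (dFn1 _ _ _ _ _ HA).
    + apply deriv_on_of. intros; apply (dFn2 _ _ _ _ _ HA).
    + apply cont_on_of. intros; apply (cFn3 _ _ _ _ _ HA).
  - intros K HK HD. destruct (CK1 K HK HD) as [R [HR HKR]].
    apply UC_on. apply (UC_sub (fun x => 0 <= x <= R)); auto. apply (U0 _ _ _ _ _ HA R HR).
  - intro n. apply (Fn1_0 _ _ _ _ _ HA).
  - intros n s _. apply (Fn1_mono _ _ _ _ _ HA).
  - intros K HK HD. destruct (CK1 K HK HD) as [R [HR HKR]].
    apply UC_on. apply (UC_sub (fun x => 0 <= x <= R)); auto.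
    apply (UC_ext _ _ (fe f1)). intros; apply fe_pos; lra. apply (U1 _ _ _ _ _ HA R HR).
  - intros n s Hs0. apply (Fn2_pos _ _ _ _ _ HA); auto.
  - apply (PV _ _ _ _ _ HA).
  - intros K HK HD. destruct (CK3 K sigma HK HD) as [eta [Heta HKe]].
    apply UC_on. apply (UC_sub (fun x => 0 <= x <= sigma - eta)); auto. apply (PVI _ _ _ _ _ HA eta Heta).
  - intros K HK HD. destruct (CK3 K sigma HK HD) as [eta [Heta HKe]].
    apply UC_on. apply (UC_sub (fun x => 0 <= x <= sigma - eta)); auto. apply (PVI _ _ _ _ _ HA eta Heta).
  - intros K HK HD. destruct (CK2 K 0 HK HD) as [eta [R [Heta HKe]]].
    apply UC_on. apply (UC_sub (fun x => eta <= x <= R)). intros x Kx; pose proof (HKe x Kx); lra.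
    apply (AN _ _ _ _ _ tsig HA Ht Hnd eta R Heta).
  - intros K HK HD. destruct (CK2 K sigma HK HD) as [eta [R [Heta HKe]]].
    apply UC_on. apply (UC_sub (fun x => sigma + eta <= x <= R)); auto.
    apply (BN _ _ _ _ _ HA eta R Heta).
  - intros g2 Hg2 Hcg K HK HD. destruct (CK2 K 0 HK HD) as [eta [R [Heta HKe]]].
    apply UC_on. apply (UC_sub (fun x => eta <= x <= R)). intros x Kx; pose proof (HKe x Kx); lra.
    apply (U3 _ _ _ _ _ g2 HA Hg2 Hcg eta R Heta).
Qed.
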